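(* Let $\Omega\subseteq\mathbb R^m$ be open, let $k\in\{0,\dots,m\}$ with $2k\neq m$, and let $F_k\in\mathcal C^4(\Omega)$ take values in the $k$-vectors of $\mathbb R_{0,m}$. Suppose $F_k$ is harmonic in $\Omega$ (respectively, inframonogenic in $\Omega$). Then $F_k$ is also inframonogenic (respectively, harmonic) in $\Omega$ if and only if any one of the following holds: (i) $F_k(\underline x)\underline x$ is left $3$-monogenic in $\Omega$, i.e. $\partial_{\underline x}^3\big(F_k(\underline x)\underline x\big)=0$; (ii) $\underline xF_k(\underline x)$ is right $3$-monogenic in $\Omega$, i.e. $\big(\underline xF_k(\underline x)\big)\partial_{\underline x}^3=0$; (iii) $\underline xF_k(\underline x)\underline x$ is biharmonic in $\Omega$, i.e. $\Delta_{\underline x}^2\big(\underline xF_k(\underline x)\underline x\big)=0$.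
   Context: $\mathbb R_{0,m}$ is the $2^m$-dimensional real Clifford algebra generated by the orthonormal basis $e_1,\dots,e_m$ of $\mathbb R^m$ with relations $e_je_k+e_ke_j=-2\delta_{jk}$; it has basis $e_A=e_{j_1}\cdots e_{j_k}$, $A=\{j_1<\dots<j_k\}$, and the $k$-vectors are $\sum_{|A|=k}a_Ae_A$, $a_A\in\mathbb R$. A point of $\mathbb R^m$ is identified with $\underline x=\sum_j x_je_j$. The Dirac operator $\partial_{\underline x}=\sum_j e_j\partial_{x_j}$ acts from the left, $\partial_{\underline x}f=\sum_j e_j\partial_{x_j}f$, or from the right, $f\partial_{\underline x}=\sum_j(\partial_{x_j}f)e_j$; powers denote iterated application on the same side. $f\in\mathcal C^2$ is inframonogenic if $\partial_{\underline x}f\partial_{\underline x}=\sum_{i,j}e_i(\partial_{x_i}\partial_{x_j}f)e_j=0$. $\Delta_{\underline x}=\sum_j\partial_{x_j}^2$. *)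

(* Defs.v *)
From Stdlib Require Import Reals Arith Lia ClassicalEpsilon.
Open Scope R_scope.

Fixpoint sumR (n : nat) (f : nat -> R) : R :=
  match n with O => 0 | S n' => sumR n' f + f n' end.

Fixpoint sumN (n : nat) (f : nat -> nat) : nat :=
  match n with O => O | S n' => (sumN n' f + f n')%nat end.

(** Basis blades e_A, A ⊆ {0,..,m-1}, are encoded by bitmasks A < 2^m
    (bit i set  <=>  e_{i+1} occurs in e_A; the generator e_{j+1} of the
    paper is the bitmask 2^j).  An element is its coefficient function
    nat -> R; only coefficients of bitmasks A < 2^m are meaningful. *)
Definition Cl := nat -> R.

Definition inA (A i : nat) : nat := if Nat.testbit A i then 1%nat else 0%nat.

Definition grade (m A : nat) : nat := sumN m (fun i => inA A i).

(** sign of e_A e_B = sign * e_{A xor B}, using e_i e_j = - e_j e_i (i<>j)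
    and e_i^2 = -1: number of inversions plus number of common generators. *)
Definition blade_sign_exp (m A B : nat) : nat :=
  (sumN m (fun b => inA B b * sumN m (fun a => if Nat.ltb b a then inA A a else 0%nat))
   + sumN m (fun i => inA A i * inA B i))%nat.

Definition blade_sign (m A B : nat) : R :=
  if Nat.even (blade_sign_exp m A B) then 1 else -1.

Definition cl_zero (m : nat) (u : Cl) : Prop := forall A, (A < 2 ^ m)%nat -> u A = 0.

Definition cl_add (u v : Cl) : Cl := fun A => u A + v A.

Definition cl_mul (m : nat) (u v : Cl) : Cl := fun C =>
  sumR (2 ^ m) (fun A => sumR (2 ^ m) (fun B =>
    if Nat.eqb (Nat.lxor A B) C then blade_sign m A B * u A * v B else 0)).

Definition gen (j : nat) : Cl := fun A => if Nat.eqb A (2 ^ j) then 1 else 0.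

Definition cl_sum (n : nat) (g : nat -> Cl) : Cl := fun A => sumR n (fun j => g j A).

Definition is_kvector (m k : nat) (u : Cl) : Prop :=
  forall A, (A < 2 ^ m)%nat -> grade m A <> k -> u A = 0.

(** * Points of R^m: sequences nat -> R, with coordinates x_{j+1} = x j for
    j < m; R^m is the subspace of sequences vanishing at indices >= m. *)
Definition pt := nat -> R.

Definition in_Rm (m : nat) (x : pt) : Prop := forall j, (m <= j)%nat -> x j = 0.

Definition vec (m : nat) (x : pt) : Cl := cl_sum m (fun j A => x j * gen j A).

Definition open_Rm (m : nat) (Om : pt -> Prop) : Prop :=
  (forall x, Om x -> in_Rm m x) /\
  (forall x, Om x -> exists eps, 0 < eps /\
     forall y, in_Rm m y -> (forall j, (j < m)%nat -> Rabs (y j - x j) < eps) -> Om y).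

Definition shift (x : pt) (j : nat) (t : R) : pt :=
  fun i => if Nat.eqb i j then x i + t else x i.

(** partial derivative d/dx_{j+1} of a real function (chosen classically;
    it is the genuine partial derivative wherever this one exists) *)
Definition pd (j : nat) (f : pt -> R) (x : pt) : R :=
  epsilon (inhabits 0) (fun l => derivable_pt_lim (fun t => f (shift x j t)) 0 l).

Definition cont_on (m : nat) (Om : pt -> Prop) (f : pt -> R) : Prop :=
  forall x, Om x -> forall eps, 0 < eps -> exists delta, 0 < delta /\
    forall y, in_Rm m y -> (forall j, (j < m)%nat -> Rabs (y j - x j) < delta) ->
      Rabs (f y - f x) < eps.

Fixpoint Ck (m n : nat) (Om : pt -> Prop) (f : pt -> R) : Prop :=
  cont_on m Om f /\
  match n with
  | O => True
  | S n' => forall j, (j < m)%nat ->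
      (forall x, Om x -> derivable_pt_lim (fun t => f (shift x j t)) 0 (pd j f x)) /\
      Ck m n' Om (pd j f)
  end.

Definition CkCl (m n : nat) (Om : pt -> Prop) (F : pt -> Cl) : Prop :=
  forall A, (A < 2 ^ m)%nat -> Ck m n Om (fun x => F x A).

Definition pdC (j : nat) (F : pt -> Cl) : pt -> Cl := fun x A => pd j (fun y => F y A) x.

Definition DirL (m : nat) (F : pt -> Cl) : pt -> Cl :=
  fun x => cl_sum m (fun j => cl_mul m (gen j) (pdC j F x)).
Definition DirR (m : nat) (F : pt -> Cl) : pt -> Cl :=
  fun x => cl_sum m (fun j => cl_mul m (pdC j F x) (gen j)).
Definition Lap (m : nat) (F : pt -> Cl) : pt -> Cl :=
  fun x => cl_sum m (fun j => pdC j (pdC j F) x).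

Definition harmonic (m : nat) (Om : pt -> Prop) (F : pt -> Cl) : Prop :=
  forall x, Om x -> cl_zero m (Lap m F x).

Definition inframonogenic (m : nat) (Om : pt -> Prop) (F : pt -> Cl) : Prop :=
  forall x, Om x -> cl_zero m (cl_sum m (fun i => cl_sum m (fun j =>
     cl_mul m (cl_mul m (gen i) (pdC i (pdC j F) x)) (gen j)))).

Definition left3mono_Fx (m : nat) (Om : pt -> Prop) (F : pt -> Cl) : Prop :=
  forall x, Om x ->
    cl_zero m (DirL m (DirL m (DirL m (fun y => cl_mul m (F y) (vec m y)))) x).

Definition right3mono_xF (m : nat) (Om : pt -> Prop) (F : pt -> Cl) : Prop :=
  forall x, Om x ->
    cl_zero m (DirR m (DirR m (DirR m (fun y => cl_mul m (vec m y) (F y)))) x).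

Definition biharm_xFx (m : nat) (Om : pt -> Prop) (F : pt -> Cl) : Prop :=
  forall x, Om x ->
    cl_zero m (Lap m (Lap m (fun y => cl_mul m (cl_mul m (vec m y) (F y)) (vec m y))) x).

(* Main.v *)
Require Import Defs.
From Stdlib Require Import Reals Arith Lia Lra Psatz ClassicalEpsilon FunctionalExtensionality PropExtensionality.
Open Scope R_scope.

Lemma sumR_ext n f g : (forall i, (i < n)%nat -> f i = g i) -> sumR n f = sumR n g.
Proof. induction n; simpl; intros H; auto. rewrite IHn by (intros; apply H; lia). rewrite H by lia; auto. Qed.

Lemma sumR_add n f g : sumR n (fun i => f i + g i) = sumR n f + sumR n g.
Proof. induction n; simpl; [ring|rewrite IHn; ring]. Qed.

Lemma sumR_scal n c f : sumR n (fun i => c * f i) = c * sumR n f.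
Proof. induction n; simpl; [ring|rewrite IHn; ring]. Qed.

Lemma sumR_zero n : sumR n (fun _ => 0) = 0.
Proof. induction n; simpl; [ring|rewrite IHn; ring]. Qed.

Lemma sumR_swap n p f : sumR n (fun i => sumR p (fun j => f i j)) = sumR p (fun j => sumR n (fun i => f i j)).
Proof.
  induction n; simpl. - symmetry; apply sumR_zero.
  - rewrite IHn, <- sumR_add. reflexivity.
Qed.

Lemma sumR_kron n a f : (a < n)%nat -> sumR n (fun i => if Nat.eqb i a then f i else 0) = f a.
Proof.
  induction n; intros H; simpl. lia.
  destruct (Nat.eqb_spec n a).
  - subst. rewrite sumR_ext with (g := fun _ => 0). rewrite sumR_zero; ring.
    intros i Hi. destruct (Nat.eqb_spec i a); [lia|auto].
  - rewrite IHn by lia. ring.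
Qed.

Lemma sumR_kron' n a f : (a < n)%nat -> sumR n (fun i => if Nat.eqb a i then f i else 0) = f a.
Proof.
  intros H. rewrite <- (sumR_kron n a f H). apply sumR_ext; intros i _.
  rewrite Nat.eqb_sym; reflexivity.
Qed.

Lemma sumR_sym2 n f : sumR n (fun i => sumR n (fun j => f i j)) =
  / 2 * sumR n (fun i => sumR n (fun j => f i j + f j i)).
Proof.
  assert (E: sumR n (fun i => sumR n (fun j => f i j + f j i)) =
     sumR n (fun i => sumR n (fun j => f i j) + sumR n (fun j => f j i))).
  { apply sumR_ext; intros; apply sumR_add. }
  rewrite E, sumR_add. rewrite (sumR_swap n n (fun i j => f j i)). field.
Qed.

Lemma sumR_opp n f : sumR n (fun i => - f i) = - sumR n f.
Proof. induction n; simpl; [ring|rewrite IHn; ring]. Qed.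

Definition sg (n : nat) : R := (-1) ^ n.
Lemma sg_add a b : sg (a + b) = sg a * sg b.
Proof. unfold sg; apply pow_add. Qed.
Lemma sg_S n : sg (S n) = - sg n.
Proof. unfold sg; simpl; ring. Qed.
Lemma sg_0 : sg 0 = 1. Proof. reflexivity. Qed.
Lemma sg_sq n : sg n * sg n = 1.
Proof. unfold sg. rewrite <- pow_add. replace (n+n)%nat with (2*n)%nat by lia.
  rewrite pow_mult. simpl. replace (-1 * (-1 * 1)) with 1 by ring. apply pow1. Qed.

Lemma even_sg n : (if Nat.even n then 1 else -1) = sg n.
Proof.
  induction n as [n IH] using lt_wf_ind.
  destruct n as [|[|n]]; [reflexivity| unfold sg; simpl; ring |].
  replace (Nat.even (S (S n))) with (Nat.even n) by reflexivity.
  rewrite IH by lia. rewrite !sg_S. ring.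
Qed.

Lemma sg_flip a b x : (x <= 1)%nat -> (a + x = b + (1 - x))%nat -> sg a = - sg b.
Proof.
  intros Hx H. destruct x as [|[|x]]; [|  |lia].
  - replace a with (S b) by lia. apply sg_S.
  - replace b with (S a) by lia. rewrite sg_S; ring.
Qed.

Lemma sg_bit x : (x <= 1)%nat -> sg x = 1 - 2 * INR x.
Proof. intros H; destruct x as [|[|x]]; [|  |lia]; simpl; unfold sg; simpl; ring. Qed.

Lemma sumN_ext n f g : (forall i, (i < n)%nat -> f i = g i) -> sumN n f = sumN n g.
Proof. induction n; simpl; intros H; auto. rewrite IHn by (intros; apply H; lia). rewrite H by lia; auto. Qed.

Lemma INR_sumN n f : INR (sumN n f) = sumR n (fun i => INR (f i)).
Proof. induction n; simpl; auto. rewrite plus_INR, IHn; auto. Qed.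

Definition flip (C j : nat) : nat := Nat.lxor C (2 ^ j).
Definition lo (j C : nat) : nat := sumN j (fun i => inA C i).
Definition sL (j C : nat) : R := sg (lo j C + 1 + inA C j).
Definition sR (m j C : nat) : R := sg (grade m C + lo j C + 1).

Lemma inA_le C i : (inA C i <= 1)%nat.
Proof. unfold inA; destruct (Nat.testbit C i); lia. Qed.

Lemma inA_flip C j i : inA (flip C j) i = if Nat.eqb i j then (1 - inA C i)%nat else inA C i.
Proof.
  unfold inA, flip. rewrite Nat.lxor_spec, Nat.pow2_bits_eqb.
  destruct (Nat.eqb_spec i j); subst; rewrite ?Nat.eqb_refl.
  - destruct (Nat.testbit C j); reflexivity.
  - destruct (Nat.eqb_spec j i); [lia|]. destruct (Nat.testbit C i); reflexivity.
Qed.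

Lemma flip_flip C j : flip (flip C j) j = C.
Proof. unfold flip. rewrite Nat.lxor_assoc, Nat.lxor_nilpotent, Nat.lxor_0_r. reflexivity. Qed.

Lemma flip_comm C i j : flip (flip C i) j = flip (flip C j) i.
Proof. unfold flip. rewrite !Nat.lxor_assoc, (Nat.lxor_comm (2^i)). reflexivity. Qed.

Lemma lxor_lt A B m : (A < 2 ^ m)%nat -> (B < 2 ^ m)%nat -> (Nat.lxor A B < 2 ^ m)%nat.
Proof.
  intros HA HB.
  assert (E: Nat.lxor A B = Nat.lxor A B mod 2 ^ m).
  { apply Nat.bits_inj; intros i.
    destruct (Nat.lt_ge_cases i m).
    - rewrite Nat.mod_pow2_bits_low; auto.
    - rewrite Nat.mod_pow2_bits_high by auto. rewrite Nat.lxor_spec.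
      rewrite <- (Nat.mod_small A (2^m)) by auto. rewrite <- (Nat.mod_small B (2^m)) by auto.
      rewrite !Nat.mod_pow2_bits_high by auto. reflexivity. }
  rewrite E. apply Nat.mod_upper_bound. apply Nat.pow_nonzero; lia.
Qed.

Lemma pow2_lt j m : (j < m)%nat -> (2 ^ j < 2 ^ m)%nat.
Proof. intros; apply Nat.pow_lt_mono_r; lia. Qed.

Lemma flip_lt C j m : (j < m)%nat -> (C < 2 ^ m)%nat -> (flip C j < 2 ^ m)%nat.
Proof. intros; apply lxor_lt; auto; apply pow2_lt; auto. Qed.

Lemma sumN_change n f g i : (i < n)%nat -> (forall l, (l < n)%nat -> l <> i -> g l = f l) ->
  (sumN n g + f i = sumN n f + g i)%nat.
Proof.
  induction n; intros Hi H; simpl. lia.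
  destruct (Nat.eq_dec n i).
  - subst. rewrite (sumN_ext i g f) by (intros; apply H; lia). lia.
  - rewrite H by lia. specialize (IHn ltac:(lia) ltac:(intros; apply H; lia)). lia.
Qed.

Lemma sumN_same n f g i : (n <= i)%nat -> (forall l, (l < n)%nat -> l <> i -> g l = f l) ->
  sumN n g = sumN n f.
Proof. intros Hi H; apply sumN_ext; intros; apply H; lia. Qed.

Lemma grade_flip m C j : (j < m)%nat -> (grade m (flip C j) + inA C j = grade m C + (1 - inA C j))%nat.
Proof.
  intros Hj. unfold grade.
  pose proof (sumN_change m (fun i => inA C i) (fun i => inA (flip C j) i) j Hj) as E.
  simpl in E. rewrite inA_flip, Nat.eqb_refl in E. apply E.
  intros l _ Hl. rewrite inA_flip. destruct (Nat.eqb_spec l j); [lia|auto].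
Qed.

Lemma lo_flip_same C j : lo j (flip C j) = lo j C.
Proof.
  unfold lo. apply sumN_ext; intros. rewrite inA_flip. destruct (Nat.eqb_spec i j); [lia|auto].
Qed.

Lemma lo_flip_ge C i j : (j <= i)%nat -> lo j (flip C i) = lo j C.
Proof.
  intros H. unfold lo. apply sumN_ext; intros. rewrite inA_flip. destruct (Nat.eqb_spec i0 i); [lia|auto].
Qed.

Lemma lo_flip_lt C i j : (i < j)%nat -> (lo j (flip C i) + inA C i = lo j C + (1 - inA C i))%nat.
Proof.
  intros H. unfold lo.
  pose proof (sumN_change j (fun l => inA C l) (fun l => inA (flip C i) l) i H) as E.
  simpl in E. rewrite inA_flip, Nat.eqb_refl in E. apply E.
  intros l _ Hl. rewrite inA_flip. destruct (Nat.eqb_spec l i); [lia|auto].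
Qed.

Lemma inA_flip_other C i j : i <> j -> inA (flip C i) j = inA C j.
Proof. intros H. rewrite inA_flip. destruct (Nat.eqb_spec j i); [lia|auto]. Qed.

Lemma inA_flip_self C j : inA (flip C j) j = (1 - inA C j)%nat.
Proof. rewrite inA_flip, Nat.eqb_refl; auto. Qed.

Lemma sg_par a b c : (a + 2 * c = b)%nat -> sg a = sg b.
Proof. intros <-. rewrite sg_add. unfold sg. rewrite pow_mult. replace ((-1)^2) with 1 by (simpl; ring).
  rewrite pow1; ring. Qed.

Definition eps (i j : nat) : R := if Nat.ltb i j then -1 else 1.

Lemma sL_flip_self C j : sL j (flip C j) = - sL j C.
Proof.
  unfold sL. rewrite lo_flip_same, inA_flip_self. apply sg_flip with (x := inA C j).
  apply inA_le. pose proof (inA_le C j). lia.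
Qed.

Lemma sL_flip_other C i j : i <> j -> sL j (flip C i) = eps i j * sL j C.
Proof.
  intros H. unfold sL, eps. rewrite inA_flip_other by auto.
  destruct (Nat.ltb_spec i j).
  - transitivity (- sg (lo j C + 1 + inA C j)); [|ring].
    apply sg_flip with (x := inA C i). apply inA_le.
    pose proof (lo_flip_lt C i j H0). lia.
  - rewrite lo_flip_ge by lia. ring.
Qed.

Lemma sR_flip_self m C j : (j < m)%nat -> sR m j (flip C j) = - sR m j C.
Proof.
  intros Hj. unfold sR. rewrite lo_flip_same. apply sg_flip with (x := inA C j).
  apply inA_le. pose proof (grade_flip m C j Hj). lia.
Qed.

Lemma sR_flip_other m C i j : (i < m)%nat -> i <> j -> sR m j (flip C i) = - eps i j * sR m j C.
Proof.
  intros Hi H. unfold sR, eps. pose proof (grade_flip m C i Hi) as G. pose proof (inA_le C i).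
  destruct (Nat.ltb_spec i j).
  - pose proof (lo_flip_lt C i j H1).
    transitivity (sg (grade m C + lo j C + 1)); [|ring].
    destruct (inA C i) as [|[|]] eqn:E; simpl in *; try lia.
    + symmetry; apply sg_par with (c := 1%nat); lia.
    + apply sg_par with (c := 1%nat); lia.
  - rewrite (lo_flip_ge C i j H1). transitivity (- sg (grade m C + lo j C + 1)); [|ring].
    apply sg_flip with (x := inA C i); auto. lia.
Qed.

Lemma sR_sL m C j : sR m j C = sL j C * sg (grade m C + inA C j).
Proof.
  unfold sR, sL. rewrite <- sg_add. apply sg_par with (c := inA C j). lia.
Qed.

Lemma inA_pow2 j a : inA (2 ^ j) a = if Nat.eqb a j then 1%nat else 0%nat.
Proof. unfold inA. rewrite Nat.pow2_bits_eqb. rewrite Nat.eqb_sym. destruct (Nat.eqb a j); auto. Qed.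

Lemma sumN_kron n j f : (j < n)%nat -> sumN n (fun a => if Nat.eqb a j then f a else 0%nat) = f j.
Proof.
  induction n; intros H; simpl. lia.
  destruct (Nat.eqb_spec n j).
  - subst. rewrite (sumN_ext j _ (fun _ => 0%nat)).
    + clear. induction j; simpl; lia.
    + intros i Hi. destruct (Nat.eqb_spec i j); [lia|auto].
  - rewrite IHn by lia. lia.
Qed.

Lemma sumN_zero n : sumN n (fun _ => 0%nat) = 0%nat.
Proof. induction n; simpl; lia. Qed.

Lemma sumN_lt_filter n j f : (j <= n)%nat -> sumN n (fun a => if Nat.ltb a j then f a else 0%nat) = sumN j f.
Proof.
  induction n; intros H; simpl.
  - replace j with 0%nat by lia. reflexivity.
  - destruct (Nat.eq_dec j (S n)).
    + subst. simpl. rewrite (sumN_ext n _ f). 2:{ intros; destruct (Nat.ltb_spec i (S n)); lia. }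
      destruct (Nat.ltb_spec n (S n)); lia.
    + rewrite IHn by lia. destruct (Nat.ltb_spec n j); lia.
Qed.

Lemma sumN_split n j f : (j < n)%nat ->
  sumN n f = (sumN n (fun a => if Nat.ltb a j then f a else 0%nat) + f j +
              sumN n (fun a => if Nat.ltb j a then f a else 0%nat))%nat.
Proof.
  intros H. induction n; simpl. lia.
  destruct (Nat.eq_dec j n).
  - subst. rewrite (sumN_ext n (fun a => if Nat.ltb n a then f a else 0%nat) (fun _ => 0%nat)).
    2:{ intros; destruct (Nat.ltb_spec n i); lia. }
    rewrite sumN_zero. rewrite (sumN_ext n (fun a => if Nat.ltb a n then f a else 0%nat) f).
    2:{ intros; destruct (Nat.ltb_spec i n); lia. }
    destruct (Nat.ltb_spec n n); lia.
  - rewrite IHn by lia. destruct (Nat.ltb_spec n j); destruct (Nat.ltb_spec j n); lia.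
Qed.

Lemma blade_sign_genl m j C : (j < m)%nat -> blade_sign m (2 ^ j) (flip C j) = sL j C.
Proof.
  intros Hj. unfold blade_sign, blade_sign_exp. rewrite even_sg.
  rewrite (sumN_ext m (fun b => inA (flip C j) b * sumN m (fun a => if Nat.ltb b a then inA (2^j) a else 0))%nat
     (fun b => if Nat.ltb b j then inA (flip C j) b else 0%nat)).
  2:{ intros b Hb. rewrite (sumN_ext m _ (fun a => if Nat.eqb a j then (if Nat.ltb b a then 1 else 0) else 0)%nat).
      2:{ intros a _. rewrite inA_pow2. destruct (Nat.eqb a j), (Nat.ltb b a); auto. }
      rewrite (sumN_kron m j (fun a => if Nat.ltb b a then 1 else 0)%nat Hj).
      destruct (Nat.ltb b j); lia. }
  rewrite sumN_lt_filter by lia.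
  rewrite (sumN_ext m _ (fun i => if Nat.eqb i j then inA (flip C j) i else 0%nat)).
  2:{ intros i _. rewrite inA_pow2. destruct (Nat.eqb i j); lia. }
  rewrite sumN_kron by auto.
  change (sumN j (inA (flip C j))) with (lo j (flip C j)). rewrite lo_flip_same, inA_flip_self. unfold sL.
  pose proof (inA_le C j). destruct (inA C j) as [|[|]]; simpl; try lia.
  - f_equal; lia.
  - apply sg_par with (c := 1%nat). lia.
Qed.

Lemma blade_sign_genr m j C : (j < m)%nat -> blade_sign m (flip C j) (2 ^ j) = sR m j C.
Proof.
  intros Hj. unfold blade_sign, blade_sign_exp. rewrite even_sg.
  rewrite (sumN_ext m (fun b => inA (2^j) b * sumN m (fun a => if Nat.ltb b a then inA (flip C j) a else 0))%nat
     (fun b => if Nat.eqb b j then sumN m (fun a => if Nat.ltb j a then inA (flip C j) a else 0%nat) else 0%nat)).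
  2:{ intros b _. rewrite inA_pow2. destruct (Nat.eqb_spec b j); subst; lia. }
  rewrite sumN_kron by auto.
  rewrite (sumN_ext m (fun i => inA (flip C j) i * inA (2^j) i)%nat (fun i => if Nat.eqb i j then inA (flip C j) i else 0%nat)).
  2:{ intros i _. rewrite inA_pow2. destruct (Nat.eqb i j); lia. }
  rewrite sumN_kron by auto.
  unfold sR, grade, lo.
  rewrite (sumN_split m j (fun i => inA C i)) by auto.
  rewrite sumN_lt_filter by lia.
  rewrite (sumN_ext m (fun a => if Nat.ltb j a then inA (flip C j) a else 0%nat) (fun a => if Nat.ltb j a then inA C a else 0%nat)).
  2:{ intros a _. destruct (Nat.ltb_spec j a); auto. apply inA_flip_other; lia. }
  rewrite inA_flip_self.
  set (h := sumN m (fun a => if Nat.ltb j a then inA C a else 0%nat)).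
  set (l := sumN j (fun i => inA C i)).
  pose proof (inA_le C j). destruct (inA C j) as [|[|]]; simpl; try lia.
  - apply sg_par with (c := l). lia.
  - apply sg_par with (c := (l + 1)%nat). lia.
Qed.

Definition Lop (j : nat) (u : Cl) : Cl := fun C => sL j C * u (flip C j).
Definition Rop (m j : nat) (u : Cl) : Cl := fun C => sR m j C * u (flip C j).

Lemma xor_c1 a B : Nat.lxor (Nat.lxor B a) a = B.
Proof. rewrite Nat.lxor_assoc, Nat.lxor_nilpotent, Nat.lxor_0_r; auto. Qed.
Lemma xor_c2 a B : Nat.lxor a (Nat.lxor B a) = B.
Proof. rewrite Nat.lxor_comm. apply xor_c1. Qed.
Lemma xor_c3 a B : Nat.lxor (Nat.lxor a B) a = B.
Proof. rewrite (Nat.lxor_comm a B). apply xor_c1. Qed.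

Lemma cl_mul_genl m j u C : (j < m)%nat -> (C < 2 ^ m)%nat -> cl_mul m (gen j) u C = Lop j u C.
Proof.
  intros Hj HC. unfold cl_mul.
  rewrite (sumR_ext _ _ (fun A => if Nat.eqb A (2^j) then
     sumR (2 ^ m) (fun B => if Nat.eqb B (flip C j) then sL j C * u B else 0) else 0)).
  2:{ intros A HA. unfold gen. destruct (Nat.eqb_spec A (2^j)).
      - subst. apply sumR_ext. intros B HB.
        destruct (Nat.eqb_spec (Nat.lxor (2^j) B) C); destruct (Nat.eqb_spec B (flip C j)).
        + rewrite e0. rewrite blade_sign_genl by auto. ring.
        + exfalso. apply n. rewrite <- e. unfold flip. rewrite xor_c3. auto.
        + exfalso. apply n. rewrite e. unfold flip. apply xor_c2.
        + auto.
      - rewrite (sumR_ext _ _ (fun _ => 0)). apply sumR_zero. intros. destruct (Nat.eqb _ _); ring. }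
  rewrite sumR_kron by (apply pow2_lt; auto).
  rewrite sumR_kron by (apply flip_lt; auto). reflexivity.
Qed.

Lemma cl_mul_genr m j u C : (j < m)%nat -> (C < 2 ^ m)%nat -> cl_mul m u (gen j) C = Rop m j u C.
Proof.
  intros Hj HC. unfold cl_mul.
  rewrite (sumR_ext _ _ (fun A => if Nat.eqb A (flip C j) then sR m j C * u A else 0)).
  2:{ intros A HA. unfold gen.
      rewrite (sumR_ext _ _ (fun B => if Nat.eqb B (2^j) then
          (if Nat.eqb (Nat.lxor A B) C then blade_sign m A B * u A else 0) else 0)).
      2:{ intros B _. destruct (Nat.eqb_spec B (2^j)); destruct (Nat.eqb _ _); ring. }
      rewrite sumR_kron by (apply pow2_lt; auto).
      destruct (Nat.eqb_spec (Nat.lxor A (2^j)) C); destruct (Nat.eqb_spec A (flip C j)).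
      + rewrite e0. rewrite blade_sign_genr by auto. ring.
      + exfalso. apply n. rewrite <- e. unfold flip. rewrite xor_c1. auto.
      + exfalso. apply n. rewrite e. unfold flip. apply xor_c1.
      + auto. }
  rewrite sumR_kron by (apply flip_lt; auto). reflexivity.
Qed.

Lemma cl_mul_ext m u u' v v' : (forall A, (A < 2^m)%nat -> u A = u' A) ->
  (forall B, (B < 2^m)%nat -> v B = v' B) -> cl_mul m u v = cl_mul m u' v'.
Proof.
  intros Hu Hv. apply functional_extensionality; intros C. unfold cl_mul.
  apply sumR_ext; intros A HA; apply sumR_ext; intros B HB. rewrite Hu, Hv by auto; auto.
Qed.

Lemma cl_mul_sum_r m u n g C : cl_mul m u (cl_sum n g) C = sumR n (fun a => cl_mul m u (g a) C).
Proof.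
  unfold cl_mul, cl_sum.
  rewrite (sumR_ext (2^m) _ (fun A => sumR n (fun a => sumR (2^m) (fun B =>
     if Nat.eqb (Nat.lxor A B) C then blade_sign m A B * u A * g a B else 0)))).
  - apply sumR_swap.
  - intros A _. rewrite <- sumR_swap. apply sumR_ext; intros B _.
    destruct (Nat.eqb _ _). + rewrite <- sumR_scal. auto. + rewrite sumR_zero; auto.
Qed.

Lemma cl_mul_sum_l m u n g C : cl_mul m (cl_sum n g) u C = sumR n (fun a => cl_mul m (g a) u C).
Proof.
  unfold cl_mul, cl_sum.
  rewrite (sumR_ext (2^m) _ (fun A => sumR n (fun a => sumR (2^m) (fun B =>
     if Nat.eqb (Nat.lxor A B) C then blade_sign m A B * g a A * u B else 0)))).
  - apply sumR_swap.
  - intros A _. rewrite <- sumR_swap. apply sumR_ext; intros B _.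
    destruct (Nat.eqb _ _).
    + rewrite (sumR_ext n (fun a => blade_sign m A B * g a A * u B) (fun a => (blade_sign m A B * u B) * g a A)) by (intros; ring).
      rewrite sumR_scal. ring.
    + rewrite sumR_zero; auto.
Qed.

Lemma cl_mul_scal_r m u c v C : cl_mul m u (fun A => c * v A) C = c * cl_mul m u v C.
Proof.
  unfold cl_mul. rewrite <- sumR_scal. apply sumR_ext; intros A _.
  rewrite <- sumR_scal. apply sumR_ext; intros B _. destruct (Nat.eqb _ _); ring.
Qed.

Lemma cl_mul_scal_l m u c v C : cl_mul m (fun A => c * v A) u C = c * cl_mul m v u C.
Proof.
  unfold cl_mul. rewrite <- sumR_scal. apply sumR_ext; intros A _.
  rewrite <- sumR_scal. apply sumR_ext; intros B _. destruct (Nat.eqb _ _); ring.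
Qed.

Lemma cl_mul_vec_r m u y C : (C < 2^m)%nat ->
  cl_mul m u (vec m y) C = sumR m (fun a => y a * Rop m a u C).
Proof.
  intros HC. unfold vec. rewrite cl_mul_sum_r. apply sumR_ext; intros a Ha.
  rewrite cl_mul_scal_r, cl_mul_genr; auto.
Qed.

Lemma cl_mul_vec_l m u y C : (C < 2^m)%nat ->
  cl_mul m (vec m y) u C = sumR m (fun a => y a * Lop a u C).
Proof.
  intros HC. unfold vec. rewrite cl_mul_sum_l. apply sumR_ext; intros a Ha.
  rewrite cl_mul_scal_l, cl_mul_genl; auto.
Qed.

Definition tau (m C : nat) : R := sg (grade m C) * (2 * INR (grade m C) - INR m).
Definition Top (m : nat) (u : Cl) : Cl := fun C => tau m C * u C.

Lemma sg_pm n : sg n = 1 \/ sg n = -1.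
Proof. induction n. left; reflexivity. rewrite sg_S. destruct IHn as [->| ->]; [right|left]; ring. Qed.

Lemma sL_pm j C : sL j C = 1 \/ sL j C = -1.
Proof. apply sg_pm. Qed.

Lemma eps_swap i j : i <> j -> eps j i = - eps i j.
Proof. intros H. unfold eps. destruct (Nat.ltb_spec i j), (Nat.ltb_spec j i); try lia; ring. Qed.

Lemma eps_pm i j : eps i j = 1 \/ eps i j = -1.
Proof. unfold eps. destruct (Nat.ltb i j); auto. Qed.

Lemma sR_atoms m j C : sR m j C = sL j C * sg (grade m C) * (1 - 2 * INR (inA C j)).
Proof. rewrite sR_sL, sg_add, (sg_bit (inA C j)) by apply inA_le. ring. Qed.

Lemma sg_grade_flip m C i : (i < m)%nat -> sg (grade m (flip C i)) = - sg (grade m C).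
Proof. intros H. apply sg_flip with (x := inA C i). apply inA_le. pose proof (grade_flip m C i H). lia. Qed.

Lemma INR_grade_flip m C i : (i < m)%nat -> INR (grade m (flip C i)) = INR (grade m C) + 1 - 2 * INR (inA C i).
Proof.
  intros H. pose proof (grade_flip m C i H). pose proof (inA_le C i).
  destruct (inA C i) as [|[|]]; simpl in *; try lia.
  - replace (grade m (flip C i)) with (S (grade m C)) by lia. rewrite S_INR. ring.
  - replace (grade m C) with (S (grade m (flip C i))) by lia. rewrite S_INR. ring.
Qed.

Lemma tau_flip m C i : (i < m)%nat -> tau m (flip C i) =
  - sg (grade m C) * (2 * (INR (grade m C) + 1 - 2 * INR (inA C i)) - INR m).
Proof. intros H. unfold tau. rewrite sg_grade_flip, INR_grade_flip by auto. ring. Qed.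

Lemma inA_cases C i : inA C i = 0%nat \/ inA C i = 1%nat.
Proof. pose proof (inA_le C i). lia. Qed.

Lemma sym_sum n f g : (forall i j, (i < n)%nat -> (j < n)%nat -> f i j + f j i = g i j + g j i) ->
  sumR n (fun i => sumR n (fun j => f i j)) = sumR n (fun i => sumR n (fun j => g i j)).
Proof.
  intros H. rewrite (sumR_sym2 n f), (sumR_sym2 n g). f_equal.
  apply sumR_ext; intros i Hi; apply sumR_ext; intros j Hj; auto.
Qed.

Lemma diag_sum n h : sumR n h = sumR n (fun i => sumR n (fun j => if Nat.eqb i j then h i else 0)).
Proof. apply sumR_ext; intros i Hi. symmetry. 
  rewrite (sumR_ext n _ (fun j => if Nat.eqb j i then h j else 0)). apply sumR_kron; auto.
  intros j _. rewrite Nat.eqb_sym. destruct (Nat.eqb_spec j i); subst; auto. Qed.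

Definition symS (m : nat) (S : nat -> nat -> Cl) := forall i j, (i < m)%nat -> (j < m)%nat -> S i j = S j i.

Lemma T_sum m u C : sumR m (fun j => Lop j (Rop m j u) C) = Top m u C.
Proof.
  unfold Lop, Rop, Top.
  rewrite (sumR_ext m _ (fun j => (- sg (grade m C) * u C) * (1 - 2 * INR (inA C j)))).
  2:{ intros j Hj. rewrite flip_flip, sR_flip_self, sR_atoms by auto.
      destruct (sL_pm j C) as [-> | ->]; ring. }
  rewrite (sumR_ext m _ (fun j => (- sg (grade m C) * u C) * 1 + (- sg (grade m C) * u C) * (-2) * INR (inA C j))) by (intros; ring).
  rewrite sumR_add, !sumR_scal. unfold tau, grade. rewrite INR_sumN.
  assert (E: sumR m (fun _ => 1) = INR m) by (clear; induction m; simpl; [auto|rewrite IHm; destruct m; simpl; ring]).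
  rewrite E. ring.
Qed.

Lemma LL_sym m S C : symS m S ->
  sumR m (fun i => sumR m (fun j => Lop i (Lop j (S i j)) C)) = - sumR m (fun i => S i i C).
Proof.
  intros HS. transitivity (sumR m (fun i => sumR m (fun j => if Nat.eqb i j then - S i i C else 0))).
  2:{ rewrite <- diag_sum. apply sumR_opp. }
  apply sym_sum. intros i j Hi Hj. unfold Lop.
  destruct (Nat.eq_dec i j).
  - subst. rewrite Nat.eqb_refl, flip_flip, sL_flip_self. destruct (sL_pm j C) as [-> | ->]; ring.
  - destruct (Nat.eqb_spec i j); [lia|]. destruct (Nat.eqb_spec j i); [lia|].
    rewrite (HS j i) by auto. rewrite (flip_comm C j i).
    rewrite sL_flip_other, (sL_flip_other C j i), (eps_swap i j) by auto. ring.
Qed.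

Lemma RR_sym m S C : symS m S ->
  sumR m (fun i => sumR m (fun j => Rop m i (Rop m j (S i j)) C)) = - sumR m (fun i => S i i C).
Proof.
  intros HS. transitivity (sumR m (fun i => sumR m (fun j => if Nat.eqb i j then - S i i C else 0))).
  2:{ rewrite <- diag_sum. apply sumR_opp. }
  apply sym_sum. intros i j Hi Hj. unfold Rop.
  destruct (Nat.eq_dec i j).
  - subst. rewrite Nat.eqb_refl, flip_flip, sR_flip_self by auto. rewrite sR_atoms.
    destruct (sL_pm j C) as [-> | ->]; destruct (sg_pm (grade m C)) as [-> | ->];
    destruct (inA_cases C j) as [-> | ->]; simpl; ring.
  - destruct (Nat.eqb_spec i j); [lia|]. destruct (Nat.eqb_spec j i); [lia|].
    rewrite (HS j i) by auto. rewrite (flip_comm C j i).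
    rewrite sR_flip_other, (sR_flip_other m C j i), (eps_swap i j) by auto. ring.
Qed.

Lemma LR_comm m i j u : (i < m)%nat -> (j < m)%nat -> Lop i (Rop m j u) = Rop m j (Lop i u).
Proof.
  intros Hi Hj. apply functional_extensionality; intros C. unfold Lop, Rop.
  rewrite flip_comm. destruct (Nat.eq_dec i j).
  - subst. rewrite sL_flip_self, sR_flip_self by auto. ring.
  - rewrite sR_flip_other, sL_flip_other, (eps_swap i j) by auto. ring.
Qed.

Ltac casesall m C i j :=
  let E1 := fresh in let E2 := fresh in let E3 := fresh in let E4 := fresh in let E5 := fresh in let E6 := fresh in
  destruct (sL_pm i C) as [E1|E1]; rewrite ?E1; destruct (sL_pm j C) as [E2|E2]; rewrite ?E2;
  destruct (sg_pm (grade m C)) as [E3|E3]; rewrite ?E3;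
  destruct (inA_cases C i) as [E4|E4]; rewrite ?E4; destruct (inA_cases C j) as [E5|E5]; rewrite ?E5;
  destruct (eps_pm i j) as [E6|E6]; rewrite ?E6; simpl; ring.

Lemma core_L m S c C : symS m S ->
  sumR m (fun i => sumR m (fun j => Top m (Lop i (Lop j (S i j))) C + Lop i (Top m (Lop j (S i j))) C + c * Lop i (Lop j (S i j)) C))
  = sumR m (fun i => sumR m (fun j => -2 * Rop m j (Lop i (S i j)) C - (if Nat.eqb i j then c * S i j C else 0))).
Proof.
  intros HS. apply sym_sum. intros i j Hi Hj. unfold Top, Lop, Rop.
  destruct (Nat.eq_dec i j).
  - subst. rewrite Nat.eqb_refl, !flip_flip, sL_flip_self, tau_flip, sR_atoms by auto.
    unfold tau. casesall m C j j.
  - destruct (Nat.eqb_spec i j); [lia|]. destruct (Nat.eqb_spec j i); [lia|].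
    rewrite (HS j i) by auto. rewrite (flip_comm C j i).
    rewrite !tau_flip by auto.
    rewrite sL_flip_other, (sL_flip_other C j i), (eps_swap i j) by auto.
    rewrite !sR_atoms. rewrite ?(inA_flip_other C i j), ?(inA_flip_other C j i) by auto.
    rewrite ?sL_flip_other by auto. rewrite ?(eps_swap i j) by auto.
    unfold tau. casesall m C i j.
Qed.

Lemma core_R m S c C : symS m S ->
  sumR m (fun i => sumR m (fun j => Top m (Rop m j (Rop m i (S i j))) C + Rop m j (Top m (Rop m i (S i j))) C + c * Rop m j (Rop m i (S i j)) C))
  = sumR m (fun i => sumR m (fun j => -2 * Rop m j (Lop i (S i j)) C - (if Nat.eqb i j then c * S i j C else 0))).
Proof.
  intros HS. apply sym_sum. intros i j Hi Hj. unfold Top, Lop, Rop.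
  destruct (Nat.eq_dec i j).
  - subst. rewrite Nat.eqb_refl, !flip_flip, sL_flip_self, ?sR_flip_self, tau_flip by auto.
    rewrite !sR_atoms. unfold tau. casesall m C j j.
  - destruct (Nat.eqb_spec i j); [lia|]. destruct (Nat.eqb_spec j i); [lia|].
    rewrite (HS j i) by auto. rewrite (flip_comm C j i).
    rewrite !tau_flip by auto.
    rewrite ?(sR_flip_other m C i j), ?(sR_flip_other m C j i) by auto.
    rewrite ?sL_flip_other by auto.
    rewrite !sR_atoms. rewrite ?(inA_flip_other C i j), ?(inA_flip_other C j i) by auto.
    rewrite ?(eps_swap i j) by auto.
    unfold tau. casesall m C i j.
Qed.

Lemma shift0 x j : shift x j 0 = x.
Proof. apply functional_extensionality; intros i. unfold shift. destruct (Nat.eqb i j); ring. Qed.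

Lemma shift_shift x j a b : shift (shift x j a) j b = shift x j (a + b).
Proof. apply functional_extensionality; intros i. unfold shift. destruct (Nat.eqb i j); ring. Qed.

Lemma shift_comm x i j a b : i <> j -> shift (shift x i a) j b = shift (shift x j b) i a.
Proof.
  intros H. apply functional_extensionality; intros l. unfold shift.
  destruct (Nat.eqb_spec l i), (Nat.eqb_spec l j); subst; try lia; ring.
Qed.

Lemma open_shift m Om x j : open_Rm m Om -> Om x -> (j < m)%nat ->
  exists e, 0 < e /\ forall t, Rabs t < e -> Om (shift x j t).
Proof.
  intros [H1 H2] Hx Hj. destruct (H2 x Hx) as [e [He H]]. exists e; split; auto.
  intros t Ht. apply H.
  - intros i Hi. unfold shift. destruct (Nat.eqb_spec i j); [lia|]. apply (H1 x Hx); auto.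
  - intros i Hi. unfold shift. destruct (Nat.eqb i j).
    + replace (x i + t - x i) with t by ring. auto.
    + replace (x i - x i) with 0 by ring. rewrite Rabs_R0; auto.
Qed.

Lemma derivable_local (f g : R -> R) e l : 0 < e -> (forall t, Rabs t < e -> f t = g t) ->
  derivable_pt_lim f 0 l -> derivable_pt_lim g 0 l.
Proof.
  intros He Hfg Hf eps Heps. destruct (Hf eps Heps) as [d Hd].
  assert (Hd': 0 < Rmin d e) by (apply Rmin_pos; [apply cond_pos|auto]).
  exists (mkposreal _ Hd'). intros h Hh Hlt. simpl in Hlt.
  rewrite <- !Hfg. apply Hd; auto. apply Rlt_le_trans with (1 := Hlt); apply Rmin_l.
  rewrite Rabs_R0; auto. rewrite Rplus_0_l. apply Rlt_le_trans with (1 := Hlt); apply Rmin_r.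
Qed.

Lemma pd_local j f g x e : 0 < e -> (forall t, Rabs t < e -> f (shift x j t) = g (shift x j t)) ->
  pd j f x = pd j g x.
Proof.
  intros He H. unfold pd. f_equal. apply functional_extensionality; intros l.
  apply propositional_extensionality. split; apply derivable_local with e; auto.
  intros; symmetry; auto.
Qed.

Lemma pd_spec j f x l : derivable_pt_lim (fun t => f (shift x j t)) 0 l -> pd j f x = l.
Proof.
  intros H. unfold pd. pose proof (epsilon_spec (inhabits 0) (fun l => derivable_pt_lim (fun t => f (shift x j t)) 0 l) (ex_intro _ l H)) as H'.
  eapply uniqueness_limite; eauto.
Qed.

Lemma pd_const j c x : pd j (fun _ => c) x = c * 0.
Proof. apply pd_spec. replace (c * 0) with 0 by ring. apply (derivable_pt_lim_const c 0). Qed.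

Lemma pd_const0 j c x : pd j (fun _ => c) x = 0.
Proof. rewrite pd_const; ring. Qed.

Lemma pd_on m Om j f g x : open_Rm m Om -> Om x -> (j < m)%nat -> (forall y, Om y -> f y = g y) ->
  pd j f x = pd j g x.
Proof.
  intros HO Hx Hj H. destruct (open_shift m Om x j HO Hx Hj) as [e [He He']].
  apply pd_local with e; auto.
Qed.

Lemma pd_zero_on m Om j f x : open_Rm m Om -> Om x -> (j < m)%nat -> (forall y, Om y -> f y = 0) ->
  pd j f x = 0.
Proof. intros. rewrite (pd_on m Om j f (fun _ => 0)); auto. apply pd_const0. Qed.

Definition dv j f x := derivable_pt_lim (fun t => f (shift x j t)) 0 (pd j f x).

Fixpoint Dn (m : nat) (Om : pt -> Prop) (n : nat) (f : pt -> R) : Prop :=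
  match n with
  | O => True
  | S n' => forall j, (j < m)%nat -> (forall x, Om x -> dv j f x) /\ Dn m Om n' (pd j f)
  end.

Lemma Ck_Dn m Om n f : Ck m n Om f -> Dn m Om n f.
Proof.
  revert f; induction n; simpl; auto. intros f [_ H] j Hj. destruct (H j Hj); split; auto.
Qed.

Lemma Dn_mono m Om n f : Dn m Om (S n) f -> Dn m Om n f.
Proof.
  revert f; induction n; simpl; auto. intros f H j Hj. destruct (H j Hj) as [H1 H2]. split; auto.
Qed.

Lemma Dn_pd m Om n f j : Dn m Om (S n) f -> (j < m)%nat -> Dn m Om n (pd j f).
Proof. intros H Hj. apply (H j Hj). Qed.

Lemma Dn_dv m Om n f j x : Dn m Om (S n) f -> (j < m)%nat -> Om x -> dv j f x.
Proof. intros H Hj Hx. apply (H j Hj); auto. Qed.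

Lemma Dn_ext m Om n f g : open_Rm m Om -> Dn m Om n f -> (forall y, Om y -> f y = g y) -> Dn m Om n g.
Proof.
  intros HO. revert f g; induction n; simpl; auto. intros f g H E j Hj.
  destruct (H j Hj) as [H1 H2]. split.
  - intros x Hx. destruct (open_shift m Om x j HO Hx Hj) as [e [He He']].
    unfold dv. rewrite <- (pd_local j f g x e); auto.
    apply derivable_local with (fun t => f (shift x j t)) e; auto. apply H1; auto.
  - apply IHn with (pd j f); auto. intros y Hy. apply pd_on with m Om; auto.
Qed.

Lemma dv_plus j f g x : dv j f x -> dv j g x -> pd j (fun y => f y + g y) x = pd j f x + pd j g x /\ dv j (fun y => f y + g y) x.
Proof.
  intros Hf Hg. pose proof (derivable_pt_lim_plus _ _ _ _ _ Hf Hg) as H.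
  assert (E: pd j (fun y => f y + g y) x = pd j f x + pd j g x) by (apply pd_spec; exact H).
  split; auto. unfold dv. rewrite E. exact H.
Qed.

Lemma dv_scal j c f x : dv j f x -> pd j (fun y => c * f y) x = c * pd j f x /\ dv j (fun y => c * f y) x.
Proof.
  intros Hf. pose proof (derivable_pt_lim_scal _ c _ _ Hf) as H.
  assert (E: pd j (fun y => c * f y) x = c * pd j f x) by (apply pd_spec; exact H).
  split; auto. unfold dv. rewrite E. exact H.
Qed.

Lemma dv_const j c x : dv j (fun _ => c) x.
Proof. unfold dv. rewrite pd_const0. apply (derivable_pt_lim_const c 0). Qed.

Lemma dv_coord j a f x : dv j f x ->
  pd j (fun y => y a * f y) x = (if Nat.eqb a j then f x else 0) + x a * pd j f x /\ dv j (fun y => y a * f y) x.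
Proof.
  intros Hf.
  assert (Hc: derivable_pt_lim (fun t => shift x j t a) 0 (if Nat.eqb a j then 1 else 0)).
  { unfold shift. destruct (Nat.eqb a j).
    - replace 1 with (0 + 1) by ring. apply derivable_pt_lim_plus. apply (derivable_pt_lim_const (x a)).
      apply derivable_pt_lim_id.
    - apply (derivable_pt_lim_const (x a)). }
  pose proof (derivable_pt_lim_mult _ _ _ _ _ Hc Hf) as H.
  cbv beta in H. rewrite shift0 in H.
  assert (E: pd j (fun y => y a * f y) x = (if Nat.eqb a j then f x else 0) + x a * pd j f x).
  { apply pd_spec. replace ((if Nat.eqb a j then f x else 0) + x a * pd j f x)
      with ((if Nat.eqb a j then 1 else 0) * f x + x a * pd j f x) by (destruct (Nat.eqb a j); ring).
    exact H. }
  split; auto. unfold dv. rewrite E.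
  replace ((if Nat.eqb a j then f x else 0) + x a * pd j f x)
      with ((if Nat.eqb a j then 1 else 0) * f x + x a * pd j f x) by (destruct (Nat.eqb a j); ring).
  exact H.
Qed.

Lemma Dn_const m Om n c : Dn m Om n (fun _ => c).
Proof.
  revert c; induction n; intros c; simpl; auto. intros j Hj. split. intros; apply dv_const.
  replace (pd j (fun _ : pt => c)) with (fun _ : pt => 0). 2:{ apply functional_extensionality; intros; symmetry; apply pd_const0. }
  apply IHn.
Qed.

Lemma Dn_plus m Om n f g : open_Rm m Om -> Dn m Om n f -> Dn m Om n g -> Dn m Om n (fun y => f y + g y).
Proof.
  intros HO. revert f g; induction n; simpl; auto. intros f g Hf Hg j Hj.
  destruct (Hf j Hj) as [Hf1 Hf2]; destruct (Hg j Hj) as [Hg1 Hg2]. split.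
  - intros x Hx. apply dv_plus; auto.
  - apply Dn_ext with (fun y => pd j f y + pd j g y); auto.
    intros y Hy. symmetry. apply dv_plus; auto.
Qed.

Lemma Dn_scal m Om n c f : open_Rm m Om -> Dn m Om n f -> Dn m Om n (fun y => c * f y).
Proof.
  intros HO. revert f; induction n; simpl; auto. intros f Hf j Hj.
  destruct (Hf j Hj) as [Hf1 Hf2]. split.
  - intros x Hx. apply dv_scal; auto.
  - apply Dn_ext with (fun y => c * pd j f y); auto.
    intros y Hy. symmetry. apply dv_scal; auto.
Qed.

Lemma Dn_sum m Om n N f : open_Rm m Om -> (forall a, (a < N)%nat -> Dn m Om n (f a)) ->
  Dn m Om n (fun y => sumR N (fun a => f a y)).
Proof.
  intros HO. induction N; intros H; simpl.
  - apply Dn_const.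
  - apply (Dn_plus m Om n (fun y => sumR N (fun a => f a y)) (f N)); auto.
Qed.

Lemma Dn_coord m Om n a f : open_Rm m Om -> Dn m Om n f -> Dn m Om n (fun y => y a * f y).
Proof.
  intros HO. revert f; induction n; simpl; auto. intros f Hf j Hj.
  destruct (Hf j Hj) as [Hf1 Hf2]. split.
  - intros x Hx. apply dv_coord; auto.
  - apply Dn_ext with (fun y => (if Nat.eqb a j then f y else 0) + y a * pd j f y); auto.
    + apply Dn_plus; auto. destruct (Nat.eqb a j).
      * apply Dn_mono. simpl. exact Hf.
      * apply Dn_const.
    + intros y Hy. symmetry. apply dv_coord; auto.
Qed.

Lemma dv_sum j N f x : (forall a, (a < N)%nat -> dv j (f a) x) ->
  pd j (fun y => sumR N (fun a => f a y)) x = sumR N (fun a => pd j (f a) x) /\ dv j (fun y => sumR N (fun a => f a y)) x.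
Proof.
  induction N; intros H; simpl.
  - split. apply pd_const0. apply dv_const.
  - destruct IHN as [E D]; [intros; apply H; lia|].
    destruct (dv_plus j (fun y => sumR N (fun a => f a y)) (f N) x D (H N ltac:(lia))) as [E' D'].
    split; auto. rewrite E', E. auto.
Qed.

Lemma deriv_translate (G : R -> R) t0 l : derivable_pt_lim (fun u => G (t0 + u)) 0 l -> derivable_pt_lim G t0 l.
Proof.
  intros H eps Heps. destruct (H eps Heps) as [d Hd]. exists d. intros h Hh Hlt.
  specialize (Hd h Hh Hlt). rewrite Rplus_0_l, Rplus_0_r in Hd. exact Hd.
Qed.

Lemma eq_of_close a b : (forall e, 0 < e -> Rabs (a - b) < 2 * e) -> a = b.
Proof.
  intros H. destruct (Req_dec (a - b) 0) as [E|E]; [lra|].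
  assert (P: 0 < Rabs (a - b) / 4) by (apply Rdiv_lt_0_compat; [apply Rabs_pos_lt; auto|lra]).
  specialize (H _ P). lra.
Qed.

Section Schwarz.
Variables (m : nat) (Om : pt -> Prop) (f : pt -> R) (i j : nat) (x : pt).
Hypotheses (HO : open_Rm m Om) (Hf : Ck m 2 Om f) (Hi : (i < m)%nat) (Hj : (j < m)%nat)
  (Hij : i <> j) (Hx : Om x).

Let P s t := shift (shift x i s) j t.

Lemma P_s s0 u t : P (s0 + u) t = shift (P s0 t) i u.
Proof. unfold P. apply functional_extensionality; intros l. unfold shift.
  destruct (Nat.eqb_spec l j), (Nat.eqb_spec l i); subst; try lia; ring. Qed.

Lemma P_t s t0 u : P s (t0 + u) = shift (P s t0) j u.
Proof. unfold P. rewrite shift_shift. auto. Qed.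

Lemma P_in s t : in_Rm m (P s t).
Proof.
  destruct HO as [H1 _]. intros l Hl. unfold P, shift.
  destruct (Nat.eqb_spec l j); [lia|]. destruct (Nat.eqb_spec l i); [lia|]. apply (H1 x Hx); auto.
Qed.

Lemma P_close s t l : (l < m)%nat -> Rabs (P s t l - x l) <= Rmax (Rabs s) (Rabs t).
Proof.
  intros Hl. unfold P, shift.
  destruct (Nat.eqb_spec l j), (Nat.eqb_spec l i); subst; try lia.
  - replace (x j + t - x j) with t by ring. apply Rmax_r.
  - replace (x i + s - x i) with s by ring. apply Rmax_l.
  - replace (x l - x l) with 0 by ring. rewrite Rabs_R0. apply Rle_trans with (Rabs s); [apply Rabs_pos|apply Rmax_l].
Qed.

Lemma ball : exists e, 0 < e /\ forall s t, Rabs s < e -> Rabs t < e -> Om (P s t).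
Proof.
  destruct HO as [H1 H2]. destruct (H2 x Hx) as [e [He H]]. exists e; split; auto.
  intros s t Hs Ht. apply H. apply P_in. intros l Hl. eapply Rle_lt_trans. apply P_close; auto.
  apply Rmax_lub_lt; auto.
Qed.

Lemma ds F s0 t : (forall y, Om y -> dv i F y) -> Om (P s0 t) ->
  derivable_pt_lim (fun s => F (P s t)) s0 (pd i F (P s0 t)).
Proof.
  intros HF HP. apply deriv_translate.
  replace (fun u => F (P (s0 + u) t)) with (fun u => F (shift (P s0 t) i u)).
  apply HF; auto. apply functional_extensionality; intros u. rewrite P_s. auto.
Qed.

Lemma dt F s t0 : (forall y, Om y -> dv j F y) -> Om (P s t0) ->
  derivable_pt_lim (fun t => F (P s t)) t0 (pd j F (P s t0)).
Proof.
  intros HF HP. apply deriv_translate.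
  replace (fun u => F (P s (t0 + u))) with (fun u => F (shift (P s t0) j u)).
  apply HF; auto. apply functional_extensionality; intros u. rewrite P_t. auto.
Qed.

Lemma schwarz_neq : pd i (pd j f) x = pd j (pd i f) x.
Proof.
  destruct Hf as [_ H]. destruct (H i Hi) as [Dfi [_ Hfi]]. destruct (H j Hj) as [Dfj [_ Hfj]].
  destruct (Hfi j Hj) as [Dij [Cij _]]. destruct (Hfj i Hi) as [Dji [Cji _]].
  destruct ball as [e [He Hb]].
  apply eq_of_close. intros eps Heps.
  destruct (Cij x Hx eps Heps) as [d1 [Hd1 C1]].
  destruct (Cji x Hx eps Heps) as [d2 [Hd2 C2]].
  set (h := Rmin e (Rmin d1 d2) / 2).
  assert (Hh: 0 < h) by (unfold h; apply Rdiv_lt_0_compat; [apply Rmin_pos; [auto|apply Rmin_pos; auto]|lra]).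
  assert (Hhe: h < e) by (unfold h; pose proof (Rmin_l e (Rmin d1 d2)); lra).
  assert (Hhd1: h < d1) by (unfold h; pose proof (Rmin_r e (Rmin d1 d2)); pose proof (Rmin_l d1 d2); lra).
  assert (Hhd2: h < d2) by (unfold h; pose proof (Rmin_r e (Rmin d1 d2)); pose proof (Rmin_r d1 d2); lra).
  assert (Hin: forall s t, 0 <= s <= h -> 0 <= t <= h -> Om (P s t)).
  { intros s t Hs Ht. apply Hb; rewrite Rabs_right by lra; lra. }
  set (Delta := f (P h h) - f (P h 0) - f (P 0 h) + f (P 0 0)).
  assert (A1: exists s1 t1, 0 < s1 < h /\ 0 < t1 < h /\ Delta = h * h * pd j (pd i f) (P s1 t1)).
  { destruct (MVT_cor2 (fun s => f (P s h) - f (P s 0)) (fun s => pd i f (P s h) - pd i f (P s 0)) 0 h Hh)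
      as [s1 [E1 Hs1]].
    { intros c Hc. apply derivable_pt_lim_minus; apply ds; auto; apply Hin; lra. }
    destruct (MVT_cor2 (fun t => pd i f (P s1 t)) (fun t => pd j (pd i f) (P s1 t)) 0 h Hh) as [t1 [E2 Ht1]].
    { intros c Hc. apply dt; auto. apply Hin; lra. }
    exists s1, t1. split; auto. split; auto. unfold Delta.
    replace (f (P h h) - f (P h 0) - f (P 0 h) + f (P 0 0)) with
      ((f (P h h) - f (P h 0)) - (f (P 0 h) - f (P 0 0))) by ring.
    rewrite E1. rewrite E2. ring. }
  assert (A2: exists s2 t2, 0 < s2 < h /\ 0 < t2 < h /\ Delta = h * h * pd i (pd j f) (P s2 t2)).
  { destruct (MVT_cor2 (fun t => f (P h t) - f (P 0 t)) (fun t => pd j f (P h t) - pd j f (P 0 t)) 0 h Hh)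
      as [t2 [E1 Ht2]].
    { intros c Hc. apply derivable_pt_lim_minus; apply dt; auto; apply Hin; lra. }
    destruct (MVT_cor2 (fun s => pd j f (P s t2)) (fun s => pd i (pd j f) (P s t2)) 0 h Hh) as [s2 [E2 Hs2]].
    { intros c Hc. apply ds; auto. apply Hin; lra. }
    exists s2, t2. split; auto. split; auto. unfold Delta.
    replace (f (P h h) - f (P h 0) - f (P 0 h) + f (P 0 0)) with
      ((f (P h h) - f (P 0 h)) - (f (P h 0) - f (P 0 0))) by ring.
    rewrite E1. rewrite E2. ring. }
  destruct A1 as [s1 [t1 [Hs1 [Ht1 E1]]]]. destruct A2 as [s2 [t2 [Hs2 [Ht2 E2]]]].
  assert (E: pd j (pd i f) (P s1 t1) = pd i (pd j f) (P s2 t2)).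
  { apply Rmult_eq_reg_l with (h * h). congruence. apply Rgt_not_eq. nra. }
  assert (K1: Rabs (pd j (pd i f) (P s1 t1) - pd j (pd i f) x) < eps).
  { apply C1. apply P_in. intros l Hl. eapply Rle_lt_trans. apply P_close; auto.
    apply Rmax_lub_lt; rewrite Rabs_right by lra; lra. }
  assert (K2: Rabs (pd i (pd j f) (P s2 t2) - pd i (pd j f) x) < eps).
  { apply C2. apply P_in. intros l Hl. eapply Rle_lt_trans. apply P_close; auto.
    apply Rmax_lub_lt; rewrite Rabs_right by lra; lra. }
  rewrite E in K1.
  replace (pd i (pd j f) x - pd j (pd i f) x) with
    ((pd i (pd j f) (P s2 t2) - pd j (pd i f) x) - (pd i (pd j f) (P s2 t2) - pd i (pd j f) x)) by ring.
  eapply Rle_lt_trans. apply Rabs_triang. rewrite Rabs_Ropp. lra.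
Qed.
End Schwarz.

Lemma schwarz m Om f i j x : open_Rm m Om -> Ck m 2 Om f -> (i < m)%nat -> (j < m)%nat -> Om x ->
  pd i (pd j f) x = pd j (pd i f) x.
Proof.
  intros. destruct (Nat.eq_dec i j). subst; auto. eapply schwarz_neq; eauto.
Qed.

Definition GoodC m Om n (G : pt -> Cl) := forall C, Dn m Om n (fun y => G y C).
Definition Sop (s : nat -> R) (p : nat -> nat) (u : Cl) : Cl := fun C => s C * u (p C).

Section CL.
Variables (m : nat) (Om : pt -> Prop).
Hypothesis HO : open_Rm m Om.

Lemma GoodC_mono n G : GoodC m Om (S n) G -> GoodC m Om n G.
Proof. intros H C. apply Dn_mono, H. Qed.

Lemma GoodC_pd n G j : GoodC m Om (S n) G -> (j < m)%nat -> GoodC m Om n (pdC j G).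
Proof. intros H Hj C. apply (Dn_pd m Om n _ j (H C) Hj). Qed.

Lemma GoodC_ext n G H : GoodC m Om n G -> (forall y, Om y -> G y = H y) -> GoodC m Om n H.
Proof. intros HG E C. apply Dn_ext with (fun y => G y C); auto. intros; rewrite E; auto. Qed.

Lemma GoodC_Sop n s p G : GoodC m Om n G -> GoodC m Om n (fun y => Sop s p (G y)).
Proof. intros H C. unfold Sop. apply Dn_scal; auto. Qed.

Lemma GoodC_sum n N H : (forall a, (a < N)%nat -> GoodC m Om n (H a)) -> GoodC m Om n (fun y => cl_sum N (fun a => H a y)).
Proof. intros HH C. unfold cl_sum. apply Dn_sum; auto. intros a Ha; apply HH; auto. Qed.

Lemma GoodC_add n G H : GoodC m Om n G -> GoodC m Om n H -> GoodC m Om n (fun y => cl_add (G y) (H y)).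
Proof. intros H1 H2 C. unfold cl_add. apply Dn_plus; auto. Qed.

Lemma GoodC_scal n c G : GoodC m Om n G -> GoodC m Om n (fun y C => c * G y C).
Proof. intros H C. apply Dn_scal; auto. Qed.

Lemma GoodC_coord n a G : GoodC m Om n G -> GoodC m Om n (fun y C => y a * G y C).
Proof. intros H C. apply Dn_coord; auto. Qed.

Lemma GoodC_const n u : GoodC m Om n (fun _ => u).
Proof. intros C. apply Dn_const. Qed.

Lemma dvC n G j x C : GoodC m Om (S n) G -> (j < m)%nat -> Om x -> dv j (fun y => G y C) x.
Proof. intros H Hj Hx. apply (Dn_dv m Om n _ j x (H C) Hj Hx). Qed.

Lemma pdC_Sop G j x s p : GoodC m Om 1 G -> (j < m)%nat -> Om x ->
  pdC j (fun y => Sop s p (G y)) x = Sop s p (pdC j G x).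
Proof.
  intros H Hj Hx. apply functional_extensionality; intros C. unfold pdC, Sop.
  apply dv_scal. apply (dvC 0 G); auto.
Qed.

Lemma pdC_sum N H j x : (forall a, (a < N)%nat -> GoodC m Om 1 (H a)) -> (j < m)%nat -> Om x ->
  pdC j (fun y => cl_sum N (fun a => H a y)) x = cl_sum N (fun a => pdC j (H a) x).
Proof.
  intros HH Hj Hx. apply functional_extensionality; intros C. unfold pdC, cl_sum.
  apply dv_sum. intros a Ha. apply (dvC 0 (H a)); auto.
Qed.

Lemma pdC_add G H j x : GoodC m Om 1 G -> GoodC m Om 1 H -> (j < m)%nat -> Om x ->
  pdC j (fun y => cl_add (G y) (H y)) x = cl_add (pdC j G x) (pdC j H x).
Proof.
  intros H1 H2 Hj Hx. apply functional_extensionality; intros C. unfold pdC, cl_add.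
  apply dv_plus; apply (dvC 0); auto.
Qed.

Lemma pdC_scal c G j x : GoodC m Om 1 G -> (j < m)%nat -> Om x ->
  pdC j (fun y C => c * G y C) x = fun C => c * pdC j G x C.
Proof.
  intros H Hj Hx. apply functional_extensionality; intros C. unfold pdC.
  apply dv_scal; apply (dvC 0); auto.
Qed.

Lemma pdC_coord a G j x : GoodC m Om 1 G -> (j < m)%nat -> Om x ->
  pdC j (fun y C => y a * G y C) x = fun C => (if Nat.eqb a j then G x C else 0) + x a * pdC j G x C.
Proof.
  intros H Hj Hx. apply functional_extensionality; intros C. unfold pdC.
  apply dv_coord; apply (dvC 0); auto.
Qed.

Lemma pdC_on G H j x : (forall y, Om y -> G y = H y) -> (j < m)%nat -> Om x -> pdC j G x = pdC j H x.
Proof.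
  intros E Hj Hx. apply functional_extensionality; intros C. unfold pdC.
  apply pd_on with m Om; auto. intros; rewrite E; auto.
Qed.

Lemma pdC_zero_on G j x : (forall y, Om y -> G y = fun _ => 0) -> (j < m)%nat -> Om x -> pdC j G x = fun _ => 0.
Proof.
  intros E Hj Hx. rewrite (pdC_on G (fun _ _ => 0)); auto.
  apply functional_extensionality; intros C. unfold pdC. apply pd_const0.
Qed.

End CL.

Lemma Lop_sumC i n g C : Lop i (cl_sum n g) C = sumR n (fun a => Lop i (g a) C).
Proof. unfold Lop, cl_sum. rewrite <- sumR_scal. auto. Qed.
Lemma Rop_sumC m i n g C : Rop m i (cl_sum n g) C = sumR n (fun a => Rop m i (g a) C).
Proof. unfold Rop, cl_sum. rewrite <- sumR_scal. auto. Qed.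
Lemma Top_sumC m n g C : Top m (cl_sum n g) C = sumR n (fun a => Top m (g a) C).
Proof. unfold Top, cl_sum. rewrite <- sumR_scal. auto. Qed.
Lemma Lop_scalC i c u C : Lop i (fun C => c * u C) C = c * Lop i u C.
Proof. unfold Lop. ring. Qed.
Lemma Rop_scalC m i c u C : Rop m i (fun C => c * u C) C = c * Rop m i u C.
Proof. unfold Rop. ring. Qed.
Lemma Top_scalC m c u C : Top m (fun C => c * u C) C = c * Top m u C.
Proof. unfold Top. ring. Qed.
Lemma Lop_addC i u v C : Lop i (cl_add u v) C = Lop i u C + Lop i v C.
Proof. unfold Lop, cl_add. ring. Qed.
Lemma Rop_addC m i u v C : Rop m i (cl_add u v) C = Rop m i u C + Rop m i v C.
Proof. unfold Rop, cl_add. ring. Qed.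
Lemma Top_addC m u v C : Top m (cl_add u v) C = Top m u C + Top m v C.
Proof. unfold Top, cl_add. ring. Qed.

Lemma cl_sum_ext n g g' : (forall a, (a < n)%nat -> g a = g' a) -> cl_sum n g = cl_sum n g'.
Proof. intros H. apply functional_extensionality; intros C. unfold cl_sum. apply sumR_ext; intros; rewrite H; auto. Qed.

Definition DL m (G : pt -> Cl) : pt -> Cl := fun y => cl_sum m (fun j => Lop j (pdC j G y)).
Definition DR m (G : pt -> Cl) : pt -> Cl := fun y => cl_sum m (fun j => Rop m j (pdC j G y)).
Definition LapC m (G : pt -> Cl) : pt -> Cl := fun y => cl_sum m (fun j => pdC j (pdC j G) y).
Definition MulX m (G : pt -> Cl) : pt -> Cl := fun y => cl_sum m (fun a C => y a * Rop m a (G y) C).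
Definition MulXL m (G : pt -> Cl) : pt -> Cl := fun y => cl_sum m (fun a C => y a * Lop a (G y) C).

Section OPS.
Variables (m : nat) (Om : pt -> Prop).
Hypothesis HO : open_Rm m Om.

Lemma GoodC_Lop n i G : GoodC m Om n G -> GoodC m Om n (fun y => Lop i (G y)).
Proof. intros H. exact (GoodC_Sop m Om HO n (sL i) (fun C => flip C i) G H). Qed.
Lemma GoodC_Rop n i G : GoodC m Om n G -> GoodC m Om n (fun y => Rop m i (G y)).
Proof. intros H. exact (GoodC_Sop m Om HO n (sR m i) (fun C => flip C i) G H). Qed.
Lemma GoodC_Top n G : GoodC m Om n G -> GoodC m Om n (fun y => Top m (G y)).
Proof. intros H. exact (GoodC_Sop m Om HO n (tau m) (fun C => C) G H). Qed.

Lemma pdC_Lop i G j x : GoodC m Om 1 G -> (j < m)%nat -> Om x ->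
  pdC j (fun y => Lop i (G y)) x = Lop i (pdC j G x).
Proof. intros. exact (pdC_Sop m Om G j x (sL i) (fun C => flip C i) H H0 H1). Qed.
Lemma pdC_Rop i G j x : GoodC m Om 1 G -> (j < m)%nat -> Om x ->
  pdC j (fun y => Rop m i (G y)) x = Rop m i (pdC j G x).
Proof. intros. exact (pdC_Sop m Om G j x (sR m i) (fun C => flip C i) H H0 H1). Qed.
Lemma pdC_Top G j x : GoodC m Om 1 G -> (j < m)%nat -> Om x ->
  pdC j (fun y => Top m (G y)) x = Top m (pdC j G x).
Proof. intros. exact (pdC_Sop m Om G j x (tau m) (fun C => C) H H0 H1). Qed.

Lemma GoodC_DL n G : GoodC m Om (S n) G -> GoodC m Om n (DL m G).
Proof. intros H. unfold DL. apply (GoodC_sum m Om HO); auto. intros j Hj. apply GoodC_Lop. apply (GoodC_pd m Om); auto. Qed.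
Lemma GoodC_DR n G : GoodC m Om (S n) G -> GoodC m Om n (DR m G).
Proof. intros H. unfold DR. apply (GoodC_sum m Om HO); auto. intros j Hj. apply GoodC_Rop. apply (GoodC_pd m Om); auto. Qed.
Lemma GoodC_LapC n G : GoodC m Om (S (S n)) G -> GoodC m Om n (LapC m G).
Proof. intros H. unfold LapC. apply (GoodC_sum m Om HO); auto. intros j Hj. apply (GoodC_pd m Om); auto. apply (GoodC_pd m Om); auto. Qed.
Lemma GoodC_MulX n G : GoodC m Om n G -> GoodC m Om n (MulX m G).
Proof. intros H. unfold MulX. apply (GoodC_sum m Om HO); auto. intros a Ha. apply (GoodC_coord m Om HO); auto. apply GoodC_Rop; auto. Qed.
Lemma GoodC_MulXL n G : GoodC m Om n G -> GoodC m Om n (MulXL m G).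
Proof. intros H. unfold MulXL. apply (GoodC_sum m Om HO); auto. intros a Ha. apply (GoodC_coord m Om HO); auto. apply GoodC_Lop; auto. Qed.

Lemma pdC_DL G i x : GoodC m Om 2 G -> (i < m)%nat -> Om x ->
  pdC i (DL m G) x = cl_sum m (fun j => Lop j (pdC i (pdC j G) x)).
Proof.
  intros H Hi Hx. unfold DL. rewrite (pdC_sum m Om); auto.
  - apply cl_sum_ext; intros j Hj. apply pdC_Lop; auto. apply (GoodC_pd m Om); auto.
  - intros j Hj. apply GoodC_Lop. apply (GoodC_pd m Om); auto.
Qed.
Lemma pdC_DR G i x : GoodC m Om 2 G -> (i < m)%nat -> Om x ->
  pdC i (DR m G) x = cl_sum m (fun j => Rop m j (pdC i (pdC j G) x)).
Proof.
  intros H Hi Hx. unfold DR. rewrite (pdC_sum m Om); auto.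
  - apply cl_sum_ext; intros j Hj. apply pdC_Rop; auto. apply (GoodC_pd m Om); auto.
  - intros j Hj. apply GoodC_Rop. apply (GoodC_pd m Om); auto.
Qed.
Lemma pdC_LapC G i x : GoodC m Om 3 G -> (i < m)%nat -> Om x ->
  pdC i (LapC m G) x = cl_sum m (fun j => pdC i (pdC j (pdC j G)) x).
Proof.
  intros H Hi Hx. unfold LapC. rewrite (pdC_sum m Om); auto.
  intros j Hj. apply (GoodC_pd m Om); auto. apply (GoodC_pd m Om); auto.
Qed.

Lemma pdC_MulX G j x : GoodC m Om 1 G -> (j < m)%nat -> Om x ->
  pdC j (MulX m G) x = cl_add (Rop m j (G x)) (MulX m (pdC j G) x).
Proof.
  intros H Hj Hx. unfold MulX. rewrite (pdC_sum m Om); auto.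
  2:{ intros a Ha. apply (GoodC_coord m Om HO); auto. apply GoodC_Rop; auto. }
  apply functional_extensionality; intros C. unfold cl_sum, cl_add.
  rewrite (sumR_ext m _ (fun a => (if Nat.eqb a j then Rop m a (G x) C else 0) + x a * Rop m a (pdC j G x) C)).
  2:{ intros a Ha. rewrite (pdC_coord m Om); auto. rewrite pdC_Rop; auto. apply GoodC_Rop; auto. }
  rewrite sumR_add. rewrite sumR_kron by auto. auto.
Qed.

Lemma pdC_MulXL G j x : GoodC m Om 1 G -> (j < m)%nat -> Om x ->
  pdC j (MulXL m G) x = cl_add (Lop j (G x)) (MulXL m (pdC j G) x).
Proof.
  intros H Hj Hx. unfold MulXL. rewrite (pdC_sum m Om); auto.
  2:{ intros a Ha. apply (GoodC_coord m Om HO); auto. apply GoodC_Lop; auto. }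
  apply functional_extensionality; intros C. unfold cl_sum, cl_add.
  rewrite (sumR_ext m _ (fun a => (if Nat.eqb a j then Lop a (G x) C else 0) + x a * Lop a (pdC j G x) C)).
  2:{ intros a Ha. rewrite (pdC_coord m Om); auto. rewrite pdC_Lop; auto. apply GoodC_Lop; auto. }
  rewrite sumR_add. rewrite sumR_kron by auto. auto.
Qed.

Lemma DL_MulX G y : GoodC m Om 1 G -> Om y ->
  DL m (MulX m G) y = cl_add (MulX m (DL m G) y) (Top m (G y)).
Proof.
  intros H Hy. unfold DL at 1.
  rewrite (cl_sum_ext m _ (fun j => Lop j (cl_add (Rop m j (G y)) (MulX m (pdC j G) y)))).
  2:{ intros j Hj. rewrite pdC_MulX; auto. }
  apply functional_extensionality; intros C. unfold cl_add at 2. unfold cl_sum at 1.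
  rewrite (sumR_ext m _ (fun j => Lop j (Rop m j (G y)) C + Lop j (MulX m (pdC j G) y) C)) by (intros; apply Lop_addC).
  rewrite sumR_add, T_sum, Rplus_comm. f_equal.
  unfold MulX, DL. unfold cl_sum at 3.
  rewrite (sumR_ext m _ (fun j => sumR m (fun a => y a * Rop m a (Lop j (pdC j G y)) C))).
  2:{ intros j Hj. rewrite Lop_sumC. apply sumR_ext; intros a Ha. rewrite Lop_scalC. rewrite LR_comm; auto. }
  rewrite sumR_swap. apply sumR_ext; intros a Ha. unfold Rop. rewrite <- !sumR_scal. auto.
Qed.

Lemma DR_MulXL G y : GoodC m Om 1 G -> Om y ->
  DR m (MulXL m G) y = cl_add (MulXL m (DR m G) y) (Top m (G y)).
Proof.
  intros H Hy. unfold DR at 1.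
  rewrite (cl_sum_ext m _ (fun j => Rop m j (cl_add (Lop j (G y)) (MulXL m (pdC j G) y)))).
  2:{ intros j Hj. rewrite pdC_MulXL; auto. }
  apply functional_extensionality; intros C. unfold cl_add at 2. unfold cl_sum at 1.
  rewrite (sumR_ext m _ (fun j => Lop j (Rop m j (G y)) C + Rop m j (MulXL m (pdC j G) y) C)).
  2:{ intros j Hj. rewrite Rop_addC. rewrite LR_comm; auto. }
  rewrite sumR_add, T_sum, Rplus_comm. f_equal.
  unfold MulXL, DR. unfold cl_sum at 3.
  rewrite (sumR_ext m _ (fun j => sumR m (fun a => y a * Lop a (Rop m j (pdC j G y)) C))).
  2:{ intros j Hj. rewrite Rop_sumC. apply sumR_ext; intros a Ha. rewrite Rop_scalC. rewrite LR_comm; auto. }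
  rewrite sumR_swap. apply sumR_ext; intros a Ha. unfold Lop. rewrite <- !sumR_scal. auto.
Qed.

Lemma MulX_sumC n H y C : sumR n (fun j => MulX m (H j) y C) = MulX m (fun z => cl_sum n (fun j => H j z)) y C.
Proof.
  unfold MulX, cl_sum. rewrite sumR_swap. apply sumR_ext; intros a Ha.
  unfold Rop. rewrite <- !sumR_scal. apply sumR_ext; intros; ring.
Qed.
Lemma MulXL_sumC n H y C : sumR n (fun j => MulXL m (H j) y C) = MulXL m (fun z => cl_sum n (fun j => H j z)) y C.
Proof.
  unfold MulXL, cl_sum. rewrite sumR_swap. apply sumR_ext; intros a Ha.
  unfold Lop. rewrite <- !sumR_scal. apply sumR_ext; intros; ring.
Qed.

Lemma LapC_MulX G y : GoodC m Om 2 G -> Om y ->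
  LapC m (MulX m G) y = cl_add (MulX m (LapC m G) y) (fun C => 2 * DR m G y C).
Proof.
  intros H Hy. unfold LapC at 1.
  rewrite (cl_sum_ext m _ (fun j => cl_add (Rop m j (pdC j G y)) (cl_add (Rop m j (pdC j G y)) (MulX m (pdC j (pdC j G)) y)))).
  2:{ intros j Hj.
      assert (G1: GoodC m Om 1 G) by (apply GoodC_mono; auto).
      assert (G1': GoodC m Om 1 (pdC j G)) by (apply (GoodC_pd m Om); auto).
      rewrite (pdC_on m Om HO (pdC j (MulX m G)) (fun z => cl_add (Rop m j (G z)) (MulX m (pdC j G) z))); auto.
      2:{ intros z Hz. apply pdC_MulX; auto. }
      rewrite (pdC_add m Om); auto.
      - rewrite pdC_Rop, pdC_MulX; auto.
      - apply GoodC_Rop; auto.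
      - apply GoodC_MulX; auto. }
  apply functional_extensionality; intros C. unfold cl_add, cl_sum at 1.
  rewrite sumR_add, sumR_add. rewrite MulX_sumC. unfold DR, cl_sum.
  unfold LapC, cl_sum. ring.
Qed.

Lemma LapC_MulXL G y : GoodC m Om 2 G -> Om y ->
  LapC m (MulXL m G) y = cl_add (MulXL m (LapC m G) y) (fun C => 2 * DL m G y C).
Proof.
  intros H Hy. unfold LapC at 1.
  rewrite (cl_sum_ext m _ (fun j => cl_add (Lop j (pdC j G y)) (cl_add (Lop j (pdC j G y)) (MulXL m (pdC j (pdC j G)) y)))).
  2:{ intros j Hj.
      assert (G1: GoodC m Om 1 G) by (apply GoodC_mono; auto).
      assert (G1': GoodC m Om 1 (pdC j G)) by (apply (GoodC_pd m Om); auto).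
      rewrite (pdC_on m Om HO (pdC j (MulXL m G)) (fun z => cl_add (Lop j (G z)) (MulXL m (pdC j G) z))); auto.
      2:{ intros z Hz. apply pdC_MulXL; auto. }
      rewrite (pdC_add m Om); auto.
      - rewrite pdC_Lop, pdC_MulXL; auto.
      - apply GoodC_Lop; auto.
      - apply GoodC_MulXL; auto. }
  apply functional_extensionality; intros C. unfold cl_add, cl_sum at 1.
  rewrite sumR_add, sumR_add. rewrite MulXL_sumC. unfold DL, cl_sum.
  unfold LapC, cl_sum. ring.
Qed.

Lemma DL_DL G x C : GoodC m Om 2 G -> Om x ->
  DL m (DL m G) x C = sumR m (fun i => sumR m (fun j => Lop i (Lop j (pdC i (pdC j G) x)) C)).
Proof.
  intros H Hx. unfold DL at 1, cl_sum. apply sumR_ext; intros i Hi.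
  rewrite pdC_DL; auto. apply Lop_sumC.
Qed.
Lemma DR_DR G x C : GoodC m Om 2 G -> Om x ->
  DR m (DR m G) x C = sumR m (fun j => sumR m (fun i => Rop m j (Rop m i (pdC j (pdC i G) x)) C)).
Proof.
  intros H Hx. unfold DR at 1, cl_sum. apply sumR_ext; intros i Hi.
  rewrite pdC_DR; auto. apply Rop_sumC.
Qed.
Lemma DL_DR G x C : GoodC m Om 2 G -> Om x ->
  DL m (DR m G) x C = sumR m (fun i => sumR m (fun j => Lop i (Rop m j (pdC i (pdC j G) x)) C)).
Proof.
  intros H Hx. unfold DL at 1, cl_sum. apply sumR_ext; intros i Hi.
  rewrite pdC_DR; auto. apply Lop_sumC.
Qed.
Lemma DR_DL G x C : GoodC m Om 2 G -> Om x ->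
  DR m (DL m G) x C = sumR m (fun j => sumR m (fun i => Rop m j (Lop i (pdC j (pdC i G) x)) C)).
Proof.
  intros H Hx. unfold DR at 1, cl_sum. apply sumR_ext; intros i Hi.
  rewrite pdC_DL; auto. apply Rop_sumC.
Qed.

End OPS.

Definition agb (m : nat) (G H : pt -> Cl) := forall z C, (C < 2 ^ m)%nat -> G z C = H z C.

Lemma agb_pd m G H j : agb m G H -> agb m (pdC j G) (pdC j H).
Proof.
  intros E z C HC. unfold pdC. f_equal. apply functional_extensionality; intros y. apply E; auto.
Qed.

Lemma agb_DirL m G H : agb m G H -> agb m (DirL m G) (DL m H).
Proof.
  intros E z C HC. unfold DirL, DL, cl_sum. apply sumR_ext; intros j Hj.
  rewrite cl_mul_genl by auto. unfold Lop. f_equal. apply (agb_pd m G H j E). apply flip_lt; auto.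
Qed.

Lemma agb_DirR m G H : agb m G H -> agb m (DirR m G) (DR m H).
Proof.
  intros E z C HC. unfold DirR, DR, cl_sum. apply sumR_ext; intros j Hj.
  rewrite cl_mul_genr by auto. unfold Rop. f_equal. apply (agb_pd m G H j E). apply flip_lt; auto.
Qed.

Lemma agb_Lap m G H : agb m G H -> agb m (Lap m G) (LapC m H).
Proof.
  intros E z C HC. unfold Lap, LapC, cl_sum. apply sumR_ext; intros j Hj.
  apply (agb_pd m _ _ j (agb_pd m G H j E)); auto.
Qed.

Lemma agb_Fx m F F' : agb m (fun y => F y) F' -> agb m (fun y => cl_mul m (F y) (vec m y)) (MulX m F').
Proof.
  intros E z C HC. rewrite cl_mul_vec_r by auto. unfold MulX, cl_sum. apply sumR_ext; intros a Ha.
  unfold Rop. rewrite E; auto. apply flip_lt; auto.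
Qed.

Lemma agb_xF m F F' : agb m (fun y => F y) F' -> agb m (fun y => cl_mul m (vec m y) (F y)) (MulXL m F').
Proof.
  intros E z C HC. rewrite cl_mul_vec_l by auto. unfold MulXL, cl_sum. apply sumR_ext; intros a Ha.
  unfold Lop. rewrite E; auto. apply flip_lt; auto.
Qed.

Lemma agb_xFx m F F' : agb m (fun y => F y) F' ->
  agb m (fun y => cl_mul m (cl_mul m (vec m y) (F y)) (vec m y)) (MulX m (MulXL m F')).
Proof.
  intros E z C HC. rewrite cl_mul_vec_r by auto. unfold MulX, cl_sum. apply sumR_ext; intros a Ha.
  unfold Rop. f_equal. f_equal. apply (agb_xF m F F' E). apply flip_lt; auto.
Qed.

Lemma cl_zero_agb m G H x : agb m G H -> (cl_zero m (G x) <-> forall C, (C < 2^m)%nat -> H x C = 0).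
Proof.
  intros E. unfold cl_zero. split; intros Hz C HC; rewrite <- ?E, ?E in *; auto. rewrite <- E; auto.
Qed.

Lemma infra_expr m F F' x C : agb m (fun y => F y) F' -> (C < 2^m)%nat ->
  cl_sum m (fun i => cl_sum m (fun j => cl_mul m (cl_mul m (gen i) (pdC i (pdC j F) x)) (gen j))) C =
  sumR m (fun i => sumR m (fun j => Rop m j (Lop i (pdC i (pdC j F') x)) C)).
Proof.
  intros E HC. unfold cl_sum. apply sumR_ext; intros i Hi. apply sumR_ext; intros j Hj.
  rewrite cl_mul_genr by auto. unfold Rop. f_equal.
  rewrite cl_mul_genl by (auto; apply flip_lt; auto). unfold Lop. f_equal.
  apply (agb_pd m _ _ i (agb_pd m _ _ j E)). apply flip_lt; auto. apply flip_lt; auto.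
Qed.

Lemma Ck_le m Om n f : Ck m (S n) Om f -> Ck m n Om f.
Proof.
  revert f; induction n; intros f [Hc H]; split; auto. intros j Hj. destruct (H j Hj); split; auto.
Qed.

Lemma Ck_const m Om n c : Ck m n Om (fun _ => c).
Proof.
  revert c; induction n; intros c; split.
  - intros x _ e He. exists 1; split; [lra|]. intros. replace (c - c) with 0 by ring. rewrite Rabs_R0; auto.
  - auto.
  - intros x _ e He. exists 1; split; [lra|]. intros. replace (c - c) with 0 by ring. rewrite Rabs_R0; auto.
  - intros j Hj. split. intros; apply dv_const.
    replace (pd j (fun _ : pt => c)) with (fun _ : pt => 0). apply IHn.
    apply functional_extensionality; intros; symmetry; apply pd_const0.
Qed.

Definition CkC m Om n (G : pt -> Cl) := forall C, Ck m n Om (fun y => G y C).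

Lemma CkC_pd m Om n G j : CkC m Om (S n) G -> (j < m)%nat -> CkC m Om n (pdC j G).
Proof. intros H Hj C. destruct (H C) as [_ H']. apply (H' j Hj). Qed.

Lemma CkC_le m Om n G : CkC m Om (S n) G -> CkC m Om n G.
Proof. intros H C. apply Ck_le, H. Qed.

Lemma CkC_Good m Om n G : CkC m Om n G -> GoodC m Om n G.
Proof. intros H C. apply Ck_Dn, H. Qed.

Lemma schwarzC m Om G i j x : open_Rm m Om -> CkC m Om 2 G -> (i < m)%nat -> (j < m)%nat -> Om x ->
  pdC i (pdC j G) x = pdC j (pdC i G) x.
Proof.
  intros HO H Hi Hj Hx. apply functional_extensionality; intros C. unfold pdC.
  apply (schwarz m Om (fun y => G y C) i j x); auto.
Qed.

Lemma pdC_comp0 G j x C : (forall y, G y C = 0) -> pdC j G x C = 0.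
Proof.
  intros H. unfold pdC. replace (fun y => G y C) with (fun _ : pt => 0). apply pd_const0.
  apply functional_extensionality; intros; symmetry; auto.
Qed.

Lemma pdC_comp0_on m Om G j x C : open_Rm m Om -> (j < m)%nat -> Om x ->
  (forall y, Om y -> G y C = 0) -> pdC j G x C = 0.
Proof. intros HO Hj Hx H. unfold pdC. apply (pd_zero_on m Om); auto. Qed.

Section EXP.
Variables (m : nat) (Om : pt -> Prop).
Hypothesis HO : open_Rm m Om.

Lemma pdC2_DL G i j x : GoodC m Om 3 G -> (i < m)%nat -> (j < m)%nat -> Om x ->
  pdC i (pdC j (DL m G)) x = cl_sum m (fun l => Lop l (pdC i (pdC j (pdC l G)) x)).
Proof.
  intros H Hi Hj Hx.
  rewrite (pdC_on m Om HO (pdC j (DL m G)) (fun y => cl_sum m (fun l => Lop l (pdC j (pdC l G) y)))); auto.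
  2:{ intros y Hy. apply (pdC_DL m Om HO); auto. apply GoodC_mono; auto. }
  rewrite (pdC_sum m Om); auto.
  - apply cl_sum_ext; intros l Hl. apply (pdC_Lop m Om); auto.
    apply (GoodC_pd m Om); auto. apply (GoodC_pd m Om); auto.
  - intros l Hl. apply (GoodC_Lop m Om HO); auto. apply (GoodC_pd m Om); auto. apply (GoodC_pd m Om); auto.
Qed.

Lemma pdC2_DR G i j x : GoodC m Om 3 G -> (i < m)%nat -> (j < m)%nat -> Om x ->
  pdC i (pdC j (DR m G)) x = cl_sum m (fun l => Rop m l (pdC i (pdC j (pdC l G)) x)).
Proof.
  intros H Hi Hj Hx.
  rewrite (pdC_on m Om HO (pdC j (DR m G)) (fun y => cl_sum m (fun l => Rop m l (pdC j (pdC l G) y)))); auto.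
  2:{ intros y Hy. apply (pdC_DR m Om HO); auto. apply GoodC_mono; auto. }
  rewrite (pdC_sum m Om); auto.
  - apply cl_sum_ext; intros l Hl. apply (pdC_Rop m Om); auto.
    apply (GoodC_pd m Om); auto. apply (GoodC_pd m Om); auto.
  - intros l Hl. apply (GoodC_Rop m Om HO); auto. apply (GoodC_pd m Om); auto. apply (GoodC_pd m Om); auto.
Qed.

Lemma pdC2_LapC G i j x : GoodC m Om 4 G -> (i < m)%nat -> (j < m)%nat -> Om x ->
  pdC i (pdC j (LapC m G)) x = cl_sum m (fun l => pdC i (pdC j (pdC l (pdC l G))) x).
Proof.
  intros H Hi Hj Hx.
  rewrite (pdC_on m Om HO (pdC j (LapC m G)) (fun y => cl_sum m (fun l => pdC j (pdC l (pdC l G)) y))); auto.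
  2:{ intros y Hy. apply (pdC_LapC m Om); auto. apply GoodC_mono; auto. }
  rewrite (pdC_sum m Om); auto.
  intros l Hl. repeat (apply (GoodC_pd m Om); auto).
Qed.

Lemma DL_on G H y : (forall z, Om z -> G z = H z) -> Om y -> DL m G y = DL m H y.
Proof. intros E Hy. unfold DL. apply cl_sum_ext; intros j Hj. rewrite (pdC_on m Om HO G H); auto. Qed.
Lemma DR_on G H y : (forall z, Om z -> G z = H z) -> Om y -> DR m G y = DR m H y.
Proof. intros E Hy. unfold DR. apply cl_sum_ext; intros j Hj. rewrite (pdC_on m Om HO G H); auto. Qed.
Lemma LapC_on G H y : (forall z, Om z -> G z = H z) -> Om y -> LapC m G y = LapC m H y.
Proof.
  intros E Hy. unfold LapC. apply cl_sum_ext; intros j Hj.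
  rewrite (pdC_on m Om HO (pdC j G) (pdC j H)); auto. intros z Hz. apply (pdC_on m Om HO); auto.
Qed.

Lemma DL_add G H y : GoodC m Om 1 G -> GoodC m Om 1 H -> Om y ->
  DL m (fun z => cl_add (G z) (H z)) y = cl_add (DL m G y) (DL m H y).
Proof.
  intros HG HH Hy. apply functional_extensionality; intros C. unfold DL.
  rewrite (cl_sum_ext m _ (fun j => Lop j (cl_add (pdC j G y) (pdC j H y)))) by (intros; rewrite (pdC_add m Om); auto).
  unfold cl_sum, cl_add at 2. rewrite <- sumR_add. apply sumR_ext; intros j Hj. apply Lop_addC.
Qed.
Lemma DR_add G H y : GoodC m Om 1 G -> GoodC m Om 1 H -> Om y ->
  DR m (fun z => cl_add (G z) (H z)) y = cl_add (DR m G y) (DR m H y).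
Proof.
  intros HG HH Hy. apply functional_extensionality; intros C. unfold DR.
  rewrite (cl_sum_ext m _ (fun j => Rop m j (cl_add (pdC j G y) (pdC j H y)))) by (intros; rewrite (pdC_add m Om); auto).
  unfold cl_sum, cl_add at 2. rewrite <- sumR_add. apply sumR_ext; intros j Hj. apply Rop_addC.
Qed.
Lemma LapC_add G H y : GoodC m Om 2 G -> GoodC m Om 2 H -> Om y ->
  LapC m (fun z => cl_add (G z) (H z)) y = cl_add (LapC m G y) (LapC m H y).
Proof.
  intros HG HH Hy. unfold LapC.
  rewrite (cl_sum_ext m _ (fun j => cl_add (pdC j (pdC j G) y) (pdC j (pdC j H) y))).
  - apply functional_extensionality; intros C. unfold cl_sum, cl_add. rewrite <- sumR_add. auto.
  - intros j Hj.
    rewrite (pdC_on m Om HO (pdC j (fun z => cl_add (G z) (H z))) (fun z => cl_add (pdC j G z) (pdC j H z))); auto.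
    2:{ intros z Hz. apply (pdC_add m Om); auto; apply GoodC_mono; auto. }
    rewrite (pdC_add m Om); auto; apply (GoodC_pd m Om); auto.
Qed.
Lemma DL_scal c G y : GoodC m Om 1 G -> Om y -> DL m (fun z C => c * G z C) y = fun C => c * DL m G y C.
Proof.
  intros HG Hy. apply functional_extensionality; intros C. unfold DL, cl_sum.
  rewrite <- sumR_scal. apply sumR_ext; intros j Hj. rewrite (pdC_scal m Om); auto. apply Lop_scalC.
Qed.
Lemma DR_scal c G y : GoodC m Om 1 G -> Om y -> DR m (fun z C => c * G z C) y = fun C => c * DR m G y C.
Proof.
  intros HG Hy. apply functional_extensionality; intros C. unfold DR, cl_sum.
  rewrite <- sumR_scal. apply sumR_ext; intros j Hj. rewrite (pdC_scal m Om); auto. apply Rop_scalC.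
Qed.
Lemma LapC_scal c G y : GoodC m Om 2 G -> Om y -> LapC m (fun z C => c * G z C) y = fun C => c * LapC m G y C.
Proof.
  intros HG Hy. apply functional_extensionality; intros C. unfold LapC, cl_sum.
  rewrite <- sumR_scal. apply sumR_ext; intros j Hj.
  rewrite (pdC_on m Om HO (pdC j (fun z C => c * G z C)) (fun z C => c * pdC j G z C)); auto.
  2:{ intros z Hz. apply (pdC_scal m Om); auto; apply GoodC_mono; auto. }
  rewrite (pdC_scal m Om); auto. apply (GoodC_pd m Om); auto.
Qed.

End EXP.

Definition trunc (m : nat) (F : pt -> Cl) : pt -> Cl := fun y C => if Nat.ltb C (2 ^ m) then F y C else 0.
Definition ckk (m k : nat) : R := sg k * (2 * INR k - INR m).

Lemma ckk_neq0 m k : (2 * k <> m)%nat -> ckk m k <> 0.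
Proof.
  intros H. unfold ckk. apply Rmult_integral_contrapositive. split.
  - destruct (sg_pm k) as [-> | ->]; lra.
  - intros E. apply H. apply INR_eq. rewrite mult_INR. simpl. lra.
Qed.

Section MAIN.
Variables (m k : nat) (Om : pt -> Prop) (F : pt -> Cl).
Hypotheses (HO : open_Rm m Om) (HCk : CkCl m 4 Om F) (Hkv : forall x, Om x -> is_kvector m k (F x)).

Let Fp := trunc m F.

Lemma Fp_agb : agb m (fun y => F y) Fp.
Proof. intros z C HC. unfold Fp, trunc. destruct (Nat.ltb_spec C (2^m)); auto; lia. Qed.

Lemma Fp_Ck : CkC m Om 4 Fp.
Proof.
  intros C. unfold Fp, trunc. destruct (Nat.ltb_spec C (2^m)).
  - apply HCk; auto.
  - apply Ck_const.
Qed.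

Lemma Fp_Good : GoodC m Om 4 Fp.
Proof. apply CkC_Good, Fp_Ck. Qed.

Lemma Fp_kv y C : Om y -> grade m C <> k -> Fp y C = 0.
Proof.
  intros Hy HC. unfold Fp, trunc. destruct (Nat.ltb_spec C (2^m)); auto. apply (Hkv y Hy); auto.
Qed.

Lemma Fp_high y C : (2 ^ m <= C)%nat -> Fp y C = 0.
Proof. intros H. unfold Fp, trunc. destruct (Nat.ltb_spec C (2^m)); auto; lia. Qed.

Lemma Top_kv u : (forall C, grade m C <> k -> u C = 0) -> Top m u = fun C => ckk m k * u C.
Proof.
  intros H. apply functional_extensionality; intros C. unfold Top, tau, ckk.
  destruct (Nat.eq_dec (grade m C) k). rewrite e; auto. rewrite H; auto. ring.
Qed.

Lemma Top_Fp y : Om y -> Top m (Fp y) = fun C => ckk m k * Fp y C.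
Proof. intros Hy. apply Top_kv. intros; apply Fp_kv; auto. Qed.

Definition S2 x i j := pdC i (pdC j Fp) x.
Definition T3 x i j l := pdC i (pdC j (pdC l Fp)) x.

Lemma S2_sym x : Om x -> symS m (S2 x).
Proof.
  intros Hx i j Hi Hj. unfold S2. apply (schwarzC m Om); auto. apply CkC_le, CkC_le, Fp_Ck.
Qed.

Lemma T3_12 x i j l : Om x -> (i < m)%nat -> (j < m)%nat -> (l < m)%nat -> T3 x i j l = T3 x j i l.
Proof.
  intros Hx Hi Hj Hl. unfold T3. apply (schwarzC m Om); auto.
  apply CkC_le. apply CkC_pd; auto. apply Fp_Ck.
Qed.

Lemma T3_23 x i j l : Om x -> (i < m)%nat -> (j < m)%nat -> (l < m)%nat -> T3 x i j l = T3 x i l j.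
Proof.
  intros Hx Hi Hj Hl. unfold T3. apply (pdC_on m Om HO); auto.
  intros y Hy. apply (schwarzC m Om); auto. apply CkC_le, CkC_le, Fp_Ck.
Qed.

Definition DFD x : Cl := fun C => sumR m (fun i => sumR m (fun j => Rop m j (Lop i (S2 x i j)) C)).
Definition LF := LapC m Fp.

Lemma LF_kv y C : Om y -> grade m C <> k -> LF y C = 0.
Proof.
  intros Hy HC. unfold LF, LapC, cl_sum. rewrite (sumR_ext m _ (fun _ => 0)). apply sumR_zero.
  intros j Hj. apply (pdC_comp0_on m Om); auto. intros z Hz.
  apply (pdC_comp0_on m Om); auto. intros w Hw. apply Fp_kv; auto.
Qed.

Lemma Good3 : GoodC m Om 3 Fp. Proof. apply GoodC_mono, Fp_Good. Qed.
Lemma Good2 : GoodC m Om 2 Fp. Proof. apply GoodC_mono, Good3. Qed.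
Lemma Good1 : GoodC m Om 1 Fp. Proof. apply GoodC_mono, Good2. Qed.

Lemma DL3 x C : Om x -> DL m (DL m (DL m Fp)) x C = - DL m LF x C.
Proof.
  intros Hx. rewrite (DL_DL m Om HO); auto. 2:{ apply (GoodC_DL m Om HO). apply Good3. }
  rewrite (sumR_ext m _ (fun i => sumR m (fun j => Lop i (Lop j (cl_sum m (fun l => Lop l (T3 x i j l)))) C))).
  2:{ intros i Hi. apply sumR_ext; intros j Hj. rewrite (pdC2_DL m Om HO); auto. apply Good3. }
  rewrite (LL_sym m (fun i j => cl_sum m (fun l => Lop l (T3 x i j l)))).
  2:{ intros i j Hi Hj. apply cl_sum_ext; intros l Hl. rewrite T3_12; auto. }
  unfold DL, LF, cl_sum. f_equal.
  rewrite sumR_swap. apply sumR_ext; intros l Hl.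
  rewrite (pdC_LapC m Om); auto. 2:{ apply Good3. } rewrite Lop_sumC. apply sumR_ext; intros i Hi.
  change (pdC l (pdC i (pdC i Fp)) x) with (T3 x l i i). rewrite (T3_12 x l i i), (T3_23 x i l i); auto.
Qed.

Lemma DR3 x C : Om x -> DR m (DR m (DR m Fp)) x C = - DR m LF x C.
Proof.
  intros Hx. rewrite (DR_DR m Om HO); auto. 2:{ apply (GoodC_DR m Om HO). apply Good3. }
  rewrite (sumR_ext m _ (fun i => sumR m (fun j => Rop m i (Rop m j (cl_sum m (fun l => Rop m l (T3 x i j l)))) C))).
  2:{ intros i Hi. apply sumR_ext; intros j Hj. rewrite (pdC2_DR m Om HO); auto. apply Good3. }
  rewrite (RR_sym m (fun i j => cl_sum m (fun l => Rop m l (T3 x i j l)))).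
  2:{ intros i j Hi Hj. apply cl_sum_ext; intros l Hl. rewrite T3_12; auto. }
  unfold DR, LF, cl_sum. f_equal.
  rewrite sumR_swap. apply sumR_ext; intros l Hl.
  rewrite (pdC_LapC m Om); auto. 2:{ apply Good3. } rewrite Rop_sumC. apply sumR_ext; intros i Hi.
  change (pdC l (pdC i (pdC i Fp)) x) with (T3 x l i i). rewrite (T3_12 x l i i), (T3_23 x i l i); auto.
Qed.

Lemma LDL x C : Om x -> LapC m (DL m Fp) x C = DL m LF x C.
Proof.
  intros Hx. unfold LapC at 1. unfold cl_sum at 1.
  rewrite (sumR_ext m _ (fun i => sumR m (fun l => Lop l (T3 x i i l) C))).
  2:{ intros i Hi. rewrite (pdC2_DL m Om HO); auto. apply Good3. }
  unfold DL at 1, LF, cl_sum at 1. rewrite sumR_swap. apply sumR_ext; intros l Hl.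
  rewrite (pdC_LapC m Om); auto. 2:{ apply Good3. } rewrite Lop_sumC. apply sumR_ext; intros i Hi.
  change (pdC l (pdC i (pdC i Fp)) x) with (T3 x l i i). rewrite (T3_12 x l i i), (T3_23 x i l i); auto.
Qed.

Lemma LDR x C : Om x -> LapC m (DR m Fp) x C = DR m LF x C.
Proof.
  intros Hx. unfold LapC at 1. unfold cl_sum at 1.
  rewrite (sumR_ext m _ (fun i => sumR m (fun l => Rop m l (T3 x i i l) C))).
  2:{ intros i Hi. rewrite (pdC2_DR m Om HO); auto. apply Good3. }
  unfold DR at 1, LF, cl_sum at 1. rewrite sumR_swap. apply sumR_ext; intros l Hl.
  rewrite (pdC_LapC m Om); auto. 2:{ apply Good3. } rewrite Rop_sumC. apply sumR_ext; intros i Hi.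
  change (pdC l (pdC i (pdC i Fp)) x) with (T3 x l i i). rewrite (T3_12 x l i i), (T3_23 x i l i); auto.
Qed.
End MAIN.

Lemma sum3 n a b c d : sumR n (fun i => sumR n (fun j => a i j + b i j + c * d i j)) =
  sumR n (fun i => sumR n (fun j => a i j)) + sumR n (fun i => sumR n (fun j => b i j)) + c * sumR n (fun i => sumR n (fun j => d i j)).
Proof.
  rewrite <- sumR_scal, <- !sumR_add. apply sumR_ext; intros i _.
  rewrite <- sumR_scal, <- !sumR_add. auto.
Qed.

Lemma sum2m n e f : sumR n (fun i => sumR n (fun j => -2 * e i j - f i j)) =
  -2 * sumR n (fun i => sumR n (fun j => e i j)) - sumR n (fun i => sumR n (fun j => f i j)).
Proof.
  unfold Rminus. rewrite <- sumR_opp, <- sumR_scal, <- sumR_add. apply sumR_ext; intros i _.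
  rewrite <- sumR_opp, <- sumR_scal, <- sumR_add. auto.
Qed.

Lemma diag_c n c (S : nat -> nat -> Cl) C : sumR n (fun i => sumR n (fun j => if Nat.eqb i j then c * S i j C else 0)) =
  c * sumR n (fun i => S i i C).
Proof.
  rewrite <- sumR_scal. rewrite (diag_sum n (fun i => c * S i i C)). apply sumR_ext; intros i _.
  apply sumR_ext; intros j _. destruct (Nat.eqb_spec i j); subst; auto.
Qed.

Ltac gdc := first [assumption | apply GoodC_mono; assumption | apply GoodC_mono, GoodC_mono; assumption | apply GoodC_mono, GoodC_mono, GoodC_mono; assumption].

Section MAIN2.
Variables (m k : nat) (Om : pt -> Prop) (F : pt -> Cl).
Hypotheses (HO : open_Rm m Om) (HCk : CkCl m 4 Om F) (Hkv : forall x, Om x -> is_kvector m k (F x)).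

Let Fp := trunc m F.
Let c := ckk m k.
Let G4 := Fp_Good m Om F HCk.
Let G3 := Good3 m Om F HCk.
Let G2 := Good2 m Om F HCk.
Let G1 := Good1 m Om F HCk.

Lemma LF_eq x C : LF m F x C = sumR m (fun i => S2 m F x i i C).
Proof. reflexivity. Qed.

Lemma left3 x C : Om x ->
  DL m (DL m (DL m (MulX m Fp))) x C = MulX m (DL m (DL m (DL m Fp))) x C - 2 * DFD m F x C - c * LF m F x C.
Proof.
  intros Hx.
  assert (s1: forall y, Om y -> DL m (MulX m Fp) y = cl_add (MulX m (DL m Fp) y) (fun C => c * Fp y C)).
  { intros y Hy. rewrite (DL_MulX m Om HO); auto. rewrite (Top_Fp m k Om F Hkv); auto. }
  assert (GD3: GoodC m Om 3 (DL m Fp)) by (apply (GoodC_DL m Om HO); auto).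
  assert (GD2: GoodC m Om 2 (DL m (DL m Fp))) by (apply (GoodC_DL m Om HO); auto).
  assert (s2: forall y, Om y -> DL m (DL m (MulX m Fp)) y =
      cl_add (cl_add (MulX m (DL m (DL m Fp)) y) (Top m (DL m Fp y))) (fun C => c * DL m Fp y C)).
  { intros y Hy. rewrite (DL_on m Om HO _ _ y s1 Hy).
    rewrite (DL_add m Om); auto.
    - rewrite (DL_MulX m Om HO); auto. 2:{ apply GoodC_mono, GoodC_mono; auto. }
      rewrite (DL_scal m Om); auto.
    - apply (GoodC_MulX m Om HO). apply GoodC_mono, GoodC_mono; auto.
    - apply (GoodC_scal m Om HO); auto. }
  rewrite (DL_on m Om HO _ _ x s2 Hx).
  rewrite (DL_add m Om); auto.
  2:{ apply (GoodC_add m Om HO). apply (GoodC_MulX m Om HO). apply GoodC_mono; auto.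
      apply (GoodC_Top m Om HO). apply GoodC_mono, GoodC_mono; auto. }
  2:{ apply (GoodC_scal m Om HO). apply GoodC_mono, GoodC_mono; auto. }
  rewrite (DL_add m Om); auto.
  2:{ apply (GoodC_MulX m Om HO). apply GoodC_mono; auto. }
  2:{ apply (GoodC_Top m Om HO). apply GoodC_mono, GoodC_mono; auto. }
  rewrite (DL_MulX m Om HO); auto. 2:{ apply GoodC_mono; auto. }
  rewrite (DL_scal m Om); auto. 2:{ apply GoodC_mono, GoodC_mono; auto. }
  unfold cl_add.
  assert (A3: DL m (DL m Fp) x C = sumR m (fun i => sumR m (fun j => Lop i (Lop j (S2 m F x i j)) C))).
  { apply (DL_DL m Om HO); auto. }
  assert (A1: Top m (DL m (DL m Fp) x) C = sumR m (fun i => sumR m (fun j => Top m (Lop i (Lop j (S2 m F x i j))) C))).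
  { unfold Top at 1. rewrite A3. rewrite <- sumR_scal. apply sumR_ext; intros i _.
    rewrite <- sumR_scal. auto. }
  assert (A2: DL m (fun z => Top m (DL m Fp z)) x C = sumR m (fun i => sumR m (fun j => Lop i (Top m (Lop j (S2 m F x i j))) C))).
  { unfold DL at 1, cl_sum at 1. apply sumR_ext; intros i Hi.
    rewrite (pdC_Top m Om); auto. 2:{ apply GoodC_mono, GoodC_mono; auto. }
    rewrite (pdC_DL m Om HO); auto. unfold Lop at 1, Top at 1, cl_sum at 1.
    rewrite <- sumR_scal, <- sumR_scal. apply sumR_ext; intros j Hj. unfold Lop at 1, Top. auto. }
  rewrite A1, A2, A3.
  pose proof (core_L m (S2 m F x) c C (S2_sym m Om F HO HCk x Hx)) as K.
  rewrite sum3, sum2m, diag_c in K. unfold DFD. rewrite LF_eq. lra.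
Qed.

Lemma right3 x C : Om x ->
  DR m (DR m (DR m (MulXL m Fp))) x C = MulXL m (DR m (DR m (DR m Fp))) x C - 2 * DFD m F x C - c * LF m F x C.
Proof.
  intros Hx.
  assert (s1: forall y, Om y -> DR m (MulXL m Fp) y = cl_add (MulXL m (DR m Fp) y) (fun C => c * Fp y C)).
  { intros y Hy. rewrite (DR_MulXL m Om HO); auto. rewrite (Top_Fp m k Om F Hkv); auto. }
  assert (GD3: GoodC m Om 3 (DR m Fp)) by (apply (GoodC_DR m Om HO); auto).
  assert (GD2: GoodC m Om 2 (DR m (DR m Fp))) by (apply (GoodC_DR m Om HO); auto).
  assert (s2: forall y, Om y -> DR m (DR m (MulXL m Fp)) y =
      cl_add (cl_add (MulXL m (DR m (DR m Fp)) y) (Top m (DR m Fp y))) (fun C => c * DR m Fp y C)).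
  { intros y Hy. rewrite (DR_on m Om HO _ _ y s1 Hy).
    rewrite (DR_add m Om); auto.
    - rewrite (DR_MulXL m Om HO); auto. 2:{ apply GoodC_mono, GoodC_mono; auto. }
      rewrite (DR_scal m Om); auto.
    - apply (GoodC_MulXL m Om HO). apply GoodC_mono, GoodC_mono; auto.
    - apply (GoodC_scal m Om HO); auto. }
  rewrite (DR_on m Om HO _ _ x s2 Hx).
  rewrite (DR_add m Om); auto.
  2:{ apply (GoodC_add m Om HO). apply (GoodC_MulXL m Om HO). apply GoodC_mono; auto.
      apply (GoodC_Top m Om HO). apply GoodC_mono, GoodC_mono; auto. }
  2:{ apply (GoodC_scal m Om HO). apply GoodC_mono, GoodC_mono; auto. }
  rewrite (DR_add m Om); auto.
  2:{ apply (GoodC_MulXL m Om HO). apply GoodC_mono; auto. }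
  2:{ apply (GoodC_Top m Om HO). apply GoodC_mono, GoodC_mono; auto. }
  rewrite (DR_MulXL m Om HO); auto. 2:{ apply GoodC_mono; auto. }
  rewrite (DR_scal m Om); auto. 2:{ apply GoodC_mono, GoodC_mono; auto. }
  unfold cl_add.
  pose proof (S2_sym m Om F HO HCk x Hx) as SY.
  assert (A3: DR m (DR m Fp) x C = sumR m (fun i => sumR m (fun j => Rop m j (Rop m i (S2 m F x i j)) C))).
  { rewrite (DR_DR m Om HO); auto. rewrite (sumR_swap m m (fun i j => Rop m j (Rop m i (S2 m F x i j)) C)).
    apply sumR_ext; intros j Hj; apply sumR_ext; intros i Hi. change (pdC j (pdC i Fp) x) with (S2 m F x j i). rewrite (SY j i); auto. }
  assert (A1: Top m (DR m (DR m Fp) x) C = sumR m (fun i => sumR m (fun j => Top m (Rop m j (Rop m i (S2 m F x i j))) C))).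
  { unfold Top at 1. rewrite A3. rewrite <- sumR_scal. apply sumR_ext; intros i _.
    rewrite <- sumR_scal. auto. }
  assert (A2: DR m (fun z => Top m (DR m Fp z)) x C = sumR m (fun i => sumR m (fun j => Rop m j (Top m (Rop m i (S2 m F x i j))) C))).
  { rewrite (sumR_swap m m (fun i j => Rop m j (Top m (Rop m i (S2 m F x i j))) C)).
    unfold DR at 1, cl_sum at 1. apply sumR_ext; intros j Hj.
    rewrite (pdC_Top m Om); auto. 2:{ apply GoodC_mono, GoodC_mono; auto. }
    rewrite (pdC_DR m Om HO); auto. unfold Rop at 1, Top at 1, cl_sum at 1.
    rewrite <- sumR_scal, <- sumR_scal. apply sumR_ext; intros i Hi. unfold Rop at 1, Top.
    change (pdC j (pdC i Fp) x) with (S2 m F x j i). rewrite (SY j i); auto. }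
  rewrite A1, A2, A3.
  pose proof (core_R m (S2 m F x) c C SY) as K.
  rewrite sum3, sum2m, diag_c in K. unfold DFD. rewrite LF_eq. lra.
Qed.

Lemma MulX_pt G H y : G y = H y -> MulX m G y = MulX m H y.
Proof. intros E. unfold MulX. rewrite E. auto. Qed.
Lemma MulXL_pt G H y : G y = H y -> MulXL m G y = MulXL m H y.
Proof. intros E. unfold MulXL. rewrite E. auto. Qed.
Lemma MulX_zero G y C : G y = (fun _ => 0) -> MulX m G y C = 0.
Proof. intros E. unfold MulX, cl_sum. rewrite E. unfold Rop. rewrite (sumR_ext m _ (fun _ => 0)). apply sumR_zero. intros; ring. Qed.
Lemma MulXL_zero G y C : G y = (fun _ => 0) -> MulXL m G y C = 0.
Proof. intros E. unfold MulXL, cl_sum. rewrite E. unfold Lop. rewrite (sumR_ext m _ (fun _ => 0)). apply sumR_zero. intros; ring. Qed.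

Lemma GLF : GoodC m Om 2 (LF m F).
Proof. unfold LF. apply (GoodC_LapC m Om HO). auto. Qed.

Lemma biharm x C : Om x -> DL m (LF m F) x = (fun _ => 0) -> DR m (LF m F) x = (fun _ => 0) ->
  LapC m (LF m F) x = (fun _ => 0) ->
  LapC m (LapC m (MulX m (MulXL m Fp))) x C = 8 * DFD m F x C + 4 * c * LF m F x C.
Proof.
  intros Hx V1 V2 V3.
  set (LFF := LF m F).
  assert (GP: GoodC m Om 4 (MulXL m Fp)) by (apply (GoodC_MulXL m Om HO); auto).
  assert (GD3: GoodC m Om 3 (DL m Fp)) by (apply (GoodC_DL m Om HO); auto).
  assert (GR3: GoodC m Om 3 (DR m Fp)) by (apply (GoodC_DR m Om HO); auto).
  assert (GL2: GoodC m Om 2 LFF) by apply GLF.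
  assert (E: forall y, Om y -> LapC m (MulX m (MulXL m Fp)) y =
    cl_add (cl_add (cl_add (MulX m (MulXL m LFF) y) (fun C => 2 * MulX m (DL m Fp) y C))
       (fun C => 2 * MulXL m (DR m Fp) y C)) (fun C => (2 * c) * Fp y C)).
  { intros y Hy. rewrite (LapC_MulX m Om HO); auto. 2:{ apply GoodC_mono, GoodC_mono; auto. }
    rewrite (MulX_pt _ (fun z => cl_add (MulXL m LFF z) (fun C => 2 * DL m Fp z C)) y).
    2:{ apply (LapC_MulXL m Om HO); auto. }
    rewrite (DR_MulXL m Om HO); auto; try gdc.
    rewrite (Top_Fp m k Om F Hkv); auto.
    apply functional_extensionality; intros D. unfold cl_add.
    unfold MulX, cl_sum, cl_add.
    rewrite (sumR_ext m (fun j => y j * Rop m j (fun A => MulXL m LFF y A + 2 * DL m Fp y A) D)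
      (fun j => y j * Rop m j (MulXL m LFF y) D + 2 * (y j * Rop m j (DL m Fp y) D)))
      by (intros; unfold Rop; ring).
    rewrite sumR_add, sumR_scal. unfold c, Fp. ring. }
  rewrite (LapC_on m Om HO _ _ x E Hx).
  assert (G2a: GoodC m Om 2 (MulX m (MulXL m LFF))) by (apply (GoodC_MulX m Om HO), (GoodC_MulXL m Om HO); auto).
  assert (G2b: GoodC m Om 2 (fun y C => 2 * MulX m (DL m Fp) y C)) by
    (apply (GoodC_scal m Om HO), (GoodC_MulX m Om HO), GoodC_mono; auto).
  assert (G2c: GoodC m Om 2 (fun y C => 2 * MulXL m (DR m Fp) y C)) by
    (apply (GoodC_scal m Om HO), (GoodC_MulXL m Om HO), GoodC_mono; auto).
  assert (G2d: GoodC m Om 2 (fun y C => (2 * c) * Fp y C)) by (apply (GoodC_scal m Om HO); auto).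
  assert (G2e: GoodC m Om 2 (fun z => cl_add (MulX m (MulXL m LFF) z) (fun C => 2 * MulX m (DL m Fp) z C)))
    by (apply (GoodC_add m Om HO); auto).
  assert (G2f: GoodC m Om 2 (fun z => cl_add (cl_add (MulX m (MulXL m LFF) z) (fun C => 2 * MulX m (DL m Fp) z C))
     (fun C => 2 * MulXL m (DR m Fp) z C))) by (apply (GoodC_add m Om HO); auto).
  assert (G2g: GoodC m Om 2 (MulX m (DL m Fp))) by (apply (GoodC_MulX m Om HO), GoodC_mono; auto).
  assert (G2h: GoodC m Om 2 (MulXL m (DR m Fp))) by (apply (GoodC_MulXL m Om HO), GoodC_mono; auto).
  assert (G2i: GoodC m Om 2 (MulXL m LFF)) by (apply (GoodC_MulXL m Om HO); auto).
  assert (G1l: GoodC m Om 1 LFF) by (apply GoodC_mono; auto).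
  assert (G2D: GoodC m Om 2 (DL m Fp)) by (apply GoodC_mono; auto).
  assert (G2R: GoodC m Om 2 (DR m Fp)) by (apply GoodC_mono; auto).
  rewrite (LapC_add m Om HO); auto.
  rewrite (LapC_add m Om HO); auto.
  rewrite (LapC_add m Om HO); auto.
  rewrite (LapC_scal m Om HO); auto.
  rewrite (LapC_scal m Om HO); auto.
  rewrite (LapC_scal m Om HO); auto.
  unfold cl_add.
  rewrite (LapC_MulX m Om HO); auto.
  rewrite (MulX_pt _ (fun z => cl_add (MulXL m (LapC m LFF) z) (fun C => 2 * DL m LFF z C)) x).
  2:{ apply (LapC_MulXL m Om HO); auto. }
  rewrite (DR_MulXL m Om HO); auto.
  rewrite (LapC_MulX m Om HO); auto.
  rewrite (LapC_MulXL m Om HO); auto.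
  unfold cl_add.
  rewrite (MulX_zero _ x). 2:{ apply functional_extensionality; intros D.
    unfold cl_add. rewrite (MulXL_zero _ x); auto. unfold LFF. rewrite V1. ring. }
  rewrite (MulXL_zero _ x). 2:{ unfold LFF; first [exact V3 | exact V2 | exact V1]. }
  rewrite (MulX_zero _ x). 2:{ apply functional_extensionality; intros D. unfold LFF. unfold Fp. rewrite (LDL m Om F HO HCk x D Hx), V1; auto. }
  rewrite (MulXL_zero _ x). 2:{ apply functional_extensionality; intros D. unfold LFF. unfold Fp. rewrite (LDR m Om F HO HCk x D Hx), V2; auto. }
  rewrite (Top_kv m k (LFF x)). 2:{ intros; unfold LFF; eapply LF_kv; eauto. }
  pose proof (S2_sym m Om F HO HCk x Hx) as SY.
  assert (A1: DR m (DL m Fp) x C = DFD m F x C).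
  { rewrite (DR_DL m Om HO); auto. unfold DFD.
    rewrite (sumR_swap m m (fun i j => Rop m j (Lop i (S2 m F x i j)) C)).
    apply sumR_ext; intros j Hj; apply sumR_ext; intros i Hi.
    change (pdC j (pdC i Fp) x) with (S2 m F x j i). rewrite (SY j i); auto. }
  assert (A2: DL m (DR m Fp) x C = DFD m F x C).
  { rewrite (DL_DR m Om HO); auto. unfold DFD.
    apply sumR_ext; intros i Hi; apply sumR_ext; intros j Hj. rewrite LR_comm; auto. }
  rewrite A1, A2. unfold LFF, LF, c, Fp. ring.
Qed.
End MAIN2.

Lemma flip_high m C j : (j < m)%nat -> (2 ^ m <= C)%nat -> (2 ^ m <= flip C j)%nat.
Proof.
  intros Hj HC. destruct (Nat.lt_ge_cases (flip C j) (2^m)); auto.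
  exfalso. pose proof (flip_lt (flip C j) j m Hj H). rewrite flip_flip in H0. lia.
Qed.

Lemma Lop_zero i : Lop i (fun _ => 0) = fun _ => 0.
Proof. apply functional_extensionality; intros; unfold Lop; ring. Qed.
Lemma Rop_zero m i : Rop m i (fun _ => 0) = fun _ => 0.
Proof. apply functional_extensionality; intros; unfold Rop; ring. Qed.

Section VAN.
Variables (m k : nat) (Om : pt -> Prop) (F : pt -> Cl).
Hypotheses (HO : open_Rm m Om) (HCk : CkCl m 4 Om F) (Hkv : forall x, Om x -> is_kvector m k (F x)).

Let Fp := trunc m F.
Let G4 := Fp_Good m Om F HCk.
Let G3 := Good3 m Om F HCk.
Let G2 := Good2 m Om F HCk.
Let G1 := Good1 m Om F HCk.

Lemma Fp_high' C : (2 ^ m <= C)%nat -> forall y, Fp y C = 0.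
Proof. intros H y. unfold Fp, trunc. destruct (Nat.ltb_spec C (2^m)); auto; lia. Qed.

Lemma LF_high y C : (2 ^ m <= C)%nat -> LF m F y C = 0.
Proof.
  intros H. unfold LF, LapC, cl_sum. rewrite (sumR_ext m _ (fun _ => 0)). apply sumR_zero.
  intros j Hj. apply pdC_comp0. intros z. apply pdC_comp0. intros w. apply Fp_high'; auto.
Qed.

Lemma DFD_high y C : (2 ^ m <= C)%nat -> DFD m F y C = 0.
Proof.
  intros H. unfold DFD. rewrite (sumR_ext m _ (fun _ => 0)). apply sumR_zero.
  intros i Hi. rewrite (sumR_ext m _ (fun _ => 0)). apply sumR_zero.
  intros j Hj. unfold Rop, Lop, S2. rewrite (pdC_comp0 _ i y). ring.
  intros z. apply pdC_comp0. intros w. apply Fp_high'. apply flip_high; auto. apply flip_high; auto.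
Qed.

Lemma T3_full x a b c : Om x -> (a < m)%nat -> (b < m)%nat -> (c < m)%nat ->
  T3 m F x a b c = T3 m F x b a c /\ T3 m F x a b c = T3 m F x a c b.
Proof. intros. split; [apply (T3_12 m Om F HO HCk)|apply (T3_23 m Om F HO HCk)]; auto. Qed.

Lemma pdDFD x l : Om x -> (l < m)%nat ->
  pdC l (DFD m F) x = cl_sum m (fun i => cl_sum m (fun j => Rop m j (Lop i (T3 m F x l i j)))).
Proof.
  intros Hx Hl.
  change (DFD m F) with (fun y => cl_sum m (fun i => cl_sum m (fun j => Rop m j (Lop i (pdC i (pdC j Fp) y))))).
  rewrite (pdC_sum m Om); auto.
  - apply cl_sum_ext; intros i Hi. rewrite (pdC_sum m Om); auto.
    + apply cl_sum_ext; intros j Hj. rewrite (pdC_Rop m Om); auto.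
      * rewrite (pdC_Lop m Om); auto. apply (GoodC_pd m Om); auto. apply (GoodC_pd m Om); auto.
      * apply (GoodC_Lop m Om HO). apply (GoodC_pd m Om); auto. apply (GoodC_pd m Om); auto.
    + intros j Hj. apply (GoodC_Rop m Om HO), (GoodC_Lop m Om HO). apply (GoodC_pd m Om); auto. apply (GoodC_pd m Om); auto.
  - intros i Hi. apply (GoodC_sum m Om HO). intros j Hj.
    apply (GoodC_Rop m Om HO), (GoodC_Lop m Om HO). apply (GoodC_pd m Om); auto. apply (GoodC_pd m Om); auto.
Qed.

Hypothesis Hinf : forall y, Om y -> forall C, (C < 2 ^ m)%nat -> DFD m F y C = 0.

Lemma DFD_zero y : Om y -> DFD m F y = fun _ => 0.
Proof.
  intros Hy. apply functional_extensionality; intros C. destruct (Nat.lt_ge_cases C (2^m)).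
  apply Hinf; auto. apply DFD_high; auto.
Qed.

Lemma K_zero x l : Om x -> (l < m)%nat -> cl_sum m (fun i => cl_sum m (fun j => Rop m j (Lop i (T3 m F x l i j)))) = fun _ => 0.
Proof.
  intros Hx Hl. rewrite <- pdDFD; auto. apply (pdC_zero_on m Om HO); auto. apply DFD_zero.
Qed.

Lemma VAN_DL x : Om x -> DL m (LF m F) x = fun _ => 0.
Proof.
  intros Hx. apply functional_extensionality; intros C.
  assert (Z: sumR m (fun l => Rop m l (cl_sum m (fun i => cl_sum m (fun j => Rop m j (Lop i (T3 m F x l i j))))) C) = 0).
  { rewrite (sumR_ext m _ (fun _ => 0)). apply sumR_zero. intros l Hl. rewrite K_zero; auto. rewrite Rop_zero; auto. }
  rewrite (sumR_ext m _ (fun l => sumR m (fun i => sumR m (fun j => Lop i (Rop m l (Rop m j (T3 m F x l i j))) C)))) in Z.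
  2:{ intros l Hl. rewrite Rop_sumC. apply sumR_ext; intros i Hi. rewrite Rop_sumC. apply sumR_ext; intros j Hj.
      rewrite <- (LR_comm m i j), <- (LR_comm m i l); auto. }
  rewrite sumR_swap in Z.
  rewrite (sumR_ext m _ (fun i => sumR m (fun l => sumR m (fun j => sL i C * Rop m l (Rop m j (T3 m F x l i j)) (flip C i))))) in Z.
  2:{ intros i Hi. auto. }
  rewrite (sumR_ext m _ (fun i => sL i C * - sumR m (fun l => T3 m F x l i l (flip C i)))) in Z.
  2:{ intros i Hi. rewrite <- (RR_sym m (fun l j => T3 m F x l i j) (flip C i)).
      - rewrite <- sumR_scal. apply sumR_ext; intros l Hl. rewrite <- sumR_scal. auto.
      - intros l j Hl Hj. destruct (T3_full x l i j) as [A B]; auto.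
        destruct (T3_full x i l j) as [A' B']; auto. destruct (T3_full x j i l) as [A'' B'']; auto.
        rewrite A, B', A''. auto. }
  unfold DL, cl_sum. unfold Lop at 1.
  transitivity (- sumR m (fun i => sL i C * - sumR m (fun l => T3 m F x l i l (flip C i)))); [|rewrite Z; ring].
  rewrite <- sumR_opp. apply sumR_ext; intros i Hi. unfold Lop.
  unfold LF. rewrite (pdC_LapC m Om); auto. unfold cl_sum.
  replace (sumR m (fun j => pdC i (pdC j (pdC j (trunc m F))) x (flip C i))) with (sumR m (fun l => T3 m F x l i l (flip C i))). ring.
  apply sumR_ext; intros l Hl. destruct (T3_full x l i l) as [A B]; auto. rewrite A. auto.
Qed.

Lemma VAN_DR x : Om x -> DR m (LF m F) x = fun _ => 0.
Proof.
  intros Hx. apply functional_extensionality; intros C.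
  assert (Z: sumR m (fun l => Lop l (cl_sum m (fun i => cl_sum m (fun j => Rop m j (Lop i (T3 m F x l i j))))) C) = 0).
  { rewrite (sumR_ext m _ (fun _ => 0)). apply sumR_zero. intros l Hl. rewrite K_zero; auto. rewrite Lop_zero; auto. }
  rewrite (sumR_ext m _ (fun l => sumR m (fun j => sumR m (fun i => Rop m j (Lop l (Lop i (T3 m F x l i j))) C)))) in Z.
  2:{ intros l Hl. rewrite Lop_sumC. rewrite <- sumR_swap. apply sumR_ext; intros i Hi. rewrite Lop_sumC. apply sumR_ext; intros j Hj.
      rewrite (LR_comm m l j); auto. }
  rewrite sumR_swap in Z.
  rewrite (sumR_ext m _ (fun j => sR m j C * - sumR m (fun l => T3 m F x l l j (flip C j)))) in Z.
  2:{ intros j Hj. rewrite <- (LL_sym m (fun l i => T3 m F x l i j) (flip C j)).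
      - rewrite <- sumR_scal. apply sumR_ext; intros l Hl. rewrite <- sumR_scal. auto.
      - intros l i Hl Hi. destruct (T3_full x l i j) as [A B]; auto. }
  unfold DR, cl_sum.
  transitivity (- sumR m (fun j => sR m j C * - sumR m (fun l => T3 m F x l l j (flip C j)))); [|rewrite Z; ring].
  rewrite <- sumR_opp. apply sumR_ext; intros j Hj. unfold Rop.
  unfold LF. rewrite (pdC_LapC m Om); auto. unfold cl_sum.
  replace (sumR m (fun l => pdC j (pdC l (pdC l (trunc m F))) x (flip C j))) with (sumR m (fun l => T3 m F x l l j (flip C j))). ring.
  apply sumR_ext; intros l Hl. destruct (T3_full x l l j) as [A B]; auto. rewrite B.
  destruct (T3_full x l j l) as [A' B']; auto. rewrite A'. auto.
Qed.

Lemma VAN_Lap x : Om x -> LapC m (LF m F) x = fun _ => 0.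
Proof.
  intros Hx. apply functional_extensionality; intros C.
  assert (Z: DL m (DL m (LF m F)) x C = 0).
  { rewrite (DL_on m Om HO _ (fun _ _ => 0) x); auto. 2:{ intros; apply VAN_DL; auto. }
    unfold DL, cl_sum. rewrite (sumR_ext m _ (fun _ => 0)). apply sumR_zero. intros j Hj.
    unfold Lop, pdC. rewrite pd_const0. ring. }
  rewrite (DL_DL m Om HO) in Z; auto. 2:{ apply GLF; auto. }
  rewrite (LL_sym m (fun i j => pdC i (pdC j (LF m F)) x)) in Z.
  - unfold LapC, cl_sum. lra.
  - intros i j Hi Hj. unfold LF. rewrite !(pdC2_LapC m Om HO); auto. apply cl_sum_ext; intros l Hl.
    apply (schwarzC m Om); auto. apply CkC_pd; auto. apply CkC_pd; auto. apply (Fp_Ck m Om F HCk).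
Qed.
End VAN.

Section VANH.
Variables (m : nat) (Om : pt -> Prop) (F : pt -> Cl).
Hypotheses (HO : open_Rm m Om).
Hypothesis Hh : forall y, Om y -> forall C, (C < 2 ^ m)%nat -> LF m F y C = 0.

Lemma LF_zero y : Om y -> LF m F y = fun _ => 0.
Proof.
  intros Hy. apply functional_extensionality; intros C. destruct (Nat.lt_ge_cases C (2^m)).
  apply Hh; auto. apply (LF_high m F); auto.
Qed.

Lemma pdLF_zero j x : (j < m)%nat -> Om x -> pdC j (LF m F) x = fun _ => 0.
Proof. intros Hj Hx. apply (pdC_zero_on m Om HO); auto. apply LF_zero. Qed.

Lemma VANH_DL x : Om x -> DL m (LF m F) x = fun _ => 0.
Proof.
  intros Hx. unfold DL. rewrite (cl_sum_ext m _ (fun _ => fun _ => 0)).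
  - apply functional_extensionality; intros C. unfold cl_sum. apply sumR_zero.
  - intros j Hj. rewrite pdLF_zero; auto. apply Lop_zero.
Qed.
Lemma VANH_DR x : Om x -> DR m (LF m F) x = fun _ => 0.
Proof.
  intros Hx. unfold DR. rewrite (cl_sum_ext m _ (fun _ => fun _ => 0)).
  - apply functional_extensionality; intros C. unfold cl_sum. apply sumR_zero.
  - intros j Hj. rewrite pdLF_zero; auto. apply Rop_zero.
Qed.
Lemma VANH_Lap x : Om x -> LapC m (LF m F) x = fun _ => 0.
Proof.
  intros Hx. unfold LapC. rewrite (cl_sum_ext m _ (fun _ => fun _ => 0)).
  - apply functional_extensionality; intros C. unfold cl_sum. apply sumR_zero.
  - intros j Hj. apply (pdC_zero_on m Om HO); auto. intros; apply pdLF_zero; auto.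
Qed.
End VANH.

Lemma iff_scale (P : pt -> Prop) (N : nat) (a b : pt -> nat -> R) r : r <> 0 ->
  (forall x, P x -> forall C, (C < N)%nat -> a x C = r * b x C) ->
  ((forall x, P x -> forall C, (C < N)%nat -> b x C = 0) <-> (forall x, P x -> forall C, (C < N)%nat -> a x C = 0)).
Proof.
  intros Hr H. split; intros K x Px C HC.
  - rewrite H, K; auto; ring.
  - specialize (H x Px C HC). rewrite K in H; auto. symmetry in H. apply Rmult_integral in H. destruct H; auto. lra.
Qed.

Lemma comb m k Om F x C : open_Rm m Om -> CkCl m 4 Om F -> (forall x, Om x -> is_kvector m k (F x)) -> Om x ->
  DL m (LF m F) x = (fun _ => 0) -> DR m (LF m F) x = (fun _ => 0) -> LapC m (LF m F) x = (fun _ => 0) ->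
  DL m (DL m (DL m (MulX m (trunc m F)))) x C = -2 * DFD m F x C - ckk m k * LF m F x C /\
  DR m (DR m (DR m (MulXL m (trunc m F)))) x C = -2 * DFD m F x C - ckk m k * LF m F x C /\
  LapC m (LapC m (MulX m (MulXL m (trunc m F)))) x C = 8 * DFD m F x C + 4 * ckk m k * LF m F x C.
Proof.
  intros HO HCk Hkv Hx V1 V2 V3. split; [|split].
  - rewrite (left3 m k Om F HO HCk Hkv x C Hx). rewrite (MulX_zero m). ring.
    apply functional_extensionality; intros D. rewrite (DL3 m Om F HO HCk x D Hx), V1. ring.
  - rewrite (right3 m k Om F HO HCk Hkv x C Hx). rewrite (MulXL_zero m). ring.
    apply functional_extensionality; intros D. rewrite (DR3 m Om F HO HCk x D Hx), V2. ring.
  - apply (biharm m k Om F HO HCk Hkv x C Hx V1 V2 V3).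
Qed.

Theorem proposition3 (m k : nat) (Om : pt -> Prop) (F : pt -> Cl) :
  open_Rm m Om ->
  (k <= m)%nat ->
  (2 * k <> m)%nat ->
  CkCl m 4 Om F ->
  (forall x, Om x -> is_kvector m k (F x)) ->
  (harmonic m Om F ->
     (inframonogenic m Om F <-> left3mono_Fx m Om F) /\
     (inframonogenic m Om F <-> right3mono_xF m Om F) /\
     (inframonogenic m Om F <-> biharm_xFx m Om F)) /\
  (inframonogenic m Om F ->
     (harmonic m Om F <-> left3mono_Fx m Om F) /\
     (harmonic m Om F <-> right3mono_xF m Om F) /\
     (harmonic m Om F <-> biharm_xFx m Om F)).
Proof.
  intros HO Hkm H2k HCk Hkv.
  pose proof (Fp_agb m F) as Ag.
  assert (EH: harmonic m Om F <-> forall x, Om x -> forall C, (C < 2^m)%nat -> LF m F x C = 0).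
  { unfold harmonic. split; intros H x Hx.
    - apply (cl_zero_agb m _ _ x (agb_Lap m _ _ Ag)). apply H; auto.
    - apply (cl_zero_agb m _ _ x (agb_Lap m _ _ Ag)). apply H; auto. }
  assert (EI: inframonogenic m Om F <-> forall x, Om x -> forall C, (C < 2^m)%nat -> DFD m F x C = 0).
  { unfold inframonogenic, cl_zero. split; intros H x Hx C HC.
    - specialize (H x Hx C HC). rewrite (infra_expr m F (trunc m F) x C Ag HC) in H. exact H.
    - rewrite (infra_expr m F (trunc m F) x C Ag HC). apply H; auto. }
  assert (EL: left3mono_Fx m Om F <-> forall x, Om x -> forall C, (C < 2^m)%nat ->
            DL m (DL m (DL m (MulX m (trunc m F)))) x C = 0).
  { unfold left3mono_Fx. pose proof (agb_DirL m _ _ (agb_DirL m _ _ (agb_DirL m _ _ (agb_Fx m F (trunc m F) Ag)))) as A.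
    split; intros H x Hx; [apply (cl_zero_agb m _ _ x A)|apply (cl_zero_agb m _ _ x A)]; apply H; auto. }
  assert (ER: right3mono_xF m Om F <-> forall x, Om x -> forall C, (C < 2^m)%nat ->
            DR m (DR m (DR m (MulXL m (trunc m F)))) x C = 0).
  { unfold right3mono_xF. pose proof (agb_DirR m _ _ (agb_DirR m _ _ (agb_DirR m _ _ (agb_xF m F (trunc m F) Ag)))) as A.
    split; intros H x Hx; [apply (cl_zero_agb m _ _ x A)|apply (cl_zero_agb m _ _ x A)]; apply H; auto. }
  assert (EB: biharm_xFx m Om F <-> forall x, Om x -> forall C, (C < 2^m)%nat ->
            LapC m (LapC m (MulX m (MulXL m (trunc m F)))) x C = 0).
  { unfold biharm_xFx. pose proof (agb_Lap m _ _ (agb_Lap m _ _ (agb_xFx m F (trunc m F) Ag))) as A.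
    split; intros H x Hx; [apply (cl_zero_agb m _ _ x A)|apply (cl_zero_agb m _ _ x A)]; apply H; auto. }
  pose proof (ckk_neq0 m k H2k) as Hc.
  split.
  - intros Hh. rewrite EH in Hh.
    assert (CB: forall x, Om x -> forall C, (C < 2^m)%nat ->
      DL m (DL m (DL m (MulX m (trunc m F)))) x C = -2 * DFD m F x C /\
      DR m (DR m (DR m (MulXL m (trunc m F)))) x C = -2 * DFD m F x C /\
      LapC m (LapC m (MulX m (MulXL m (trunc m F)))) x C = 8 * DFD m F x C).
    { intros x Hx C HC.
      destruct (comb m k Om F x C HO HCk Hkv Hx (VANH_DL m Om F HO Hh x Hx) (VANH_DR m Om F HO Hh x Hx)
        (VANH_Lap m Om F HO Hh x Hx)) as [A [B D]].
      rewrite (Hh x Hx C HC) in A, B, D. split; [|split]; [rewrite A|rewrite B|rewrite D]; ring. }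
    rewrite EI, EL, ER, EB. split; [|split].
    + apply iff_scale with (r := -2); [lra|]. intros x Hx C HC. apply CB; auto.
    + apply iff_scale with (r := -2); [lra|]. intros x Hx C HC. apply CB; auto.
    + apply iff_scale with (r := 8); [lra|]. intros x Hx C HC. apply CB; auto.
  - intros Hi. rewrite EI in Hi.
    assert (CB: forall x, Om x -> forall C, (C < 2^m)%nat ->
      DL m (DL m (DL m (MulX m (trunc m F)))) x C = - ckk m k * LF m F x C /\
      DR m (DR m (DR m (MulXL m (trunc m F)))) x C = - ckk m k * LF m F x C /\
      LapC m (LapC m (MulX m (MulXL m (trunc m F)))) x C = (4 * ckk m k) * LF m F x C).
    { intros x Hx C HC.
      destruct (comb m k Om F x C HO HCk Hkv Hx (VAN_DL m Om F HO HCk Hi x Hx) (VAN_DR m Om F HO HCk Hi x Hx)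
        (VAN_Lap m Om F HO HCk Hi x Hx)) as [A [B D]].
      rewrite (Hi x Hx C HC) in A, B, D. split; [|split]; [rewrite A|rewrite B|rewrite D]; ring. }
    rewrite EH, EL, ER, EB. split; [|split].
    + apply iff_scale with (r := - ckk m k); [intro E; apply Hc; lra|]. intros x Hx C HC. apply CB; auto.
    + apply iff_scale with (r := - ckk m k); [intro E; apply Hc; lra|]. intros x Hx C HC. apply CB; auto.
    + apply iff_scale with (r := 4 * ckk m k); [intro E; apply Hc; lra|]. intros x Hx C HC. apply CB; auto.
Qed.
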